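(* Let $(L,H)$ be a correspondence-cover of a cycle $C$ such that $|L(v)|\geq 2$ for all $v\in V(C)$ and $|L(v)|\geq 3$ for at least three vertices $v$ of $C$. Then $(L,H)$ has a fractional packing.
   Context: A correspondence-cover of a graph $G$ is a pair $(L,H)$ where $H$ is a graph and $L$ maps each $v\in V(G)$ to a subset $L(v)\subseteq V(H)$ such that: the sets $L(v)$ partition $V(H)$; each $L(v)$ induces a clique in $H$; if $uv\notin E(G)$ there are no edges of $H$ between $L(u)$ and $L(v)$; if $uv\in E(G)$ the edges of $H$ between $L(u)$ and $L(v)$ form a matching. An independent transversal is an independent set of $H$ containing exactly one vertex of each $L(v)$. A cover has a fractional packing if there is a probability distribution on independent transversals $I$ such that $\Pr(x\in I)=1/|L(v)|$ for every vertex $v$ and every $x\in L(v)$ (lists need not have equal sizes). *)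

(* Defs.v *)
From mathcomp Require Import all_boot all_order all_algebra.
From mathcomp Require Import reals.
Set Implicit Arguments. Unset Strict Implicit. Unset Printing Implicit Defensive.
Import Order.TTheory GRing.Theory Num.Theory.

(* The cycle C_n on vertex set 'I_n (n >= 3 assumed where used):
   i ~ j iff j = i+1 mod n or i = j+1 mod n. *)
Definition cycle_adj (n : nat) (i j : 'I_n) : bool :=
  (nat_of_ord j == (i.+1 %% n)%N) || (nat_of_ord i == (j.+1 %% n)%N).

Definition simple_graph (V : finType) (h : rel V) : Prop :=
  (forall x y, h x y = h y x) /\ (forall x, ~~ h x x).

Definition correspondence_cover (I V : finType) (adj : rel I)
    (h : rel V) (L : I -> {set V}) : Prop :=
  simple_graph h /\
  (forall x : V, exists v, x \in L v) /\
  (forall (u v : I) (x : V), x \in L u -> x \in L v -> u = v) /\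
  (forall v x y, x \in L v -> y \in L v -> x != y -> h x y) /\
  (forall u v x y, u != v -> ~~ adj u v -> x \in L u -> y \in L v -> ~~ h x y) /\
  (forall u v x, adj u v -> x \in L u -> #|[set y in L v | h x y]| <= 1)%N.

Definition indep_transversal (I V : finType) (h : rel V) (L : I -> {set V})
    (T : {set V}) : bool :=
  [forall x in T, forall y in T, ~~ h x y] &&
  [forall v, #|T :&: L v| == 1%N].

Definition fractional_packing (R : realType) (I V : finType) (h : rel V)
    (L : I -> {set V}) : Prop :=
  exists w : {set V} -> R,
    (forall T, 0 <= w T)%R /\
    (forall T, w T != 0%R -> indep_transversal h L T) /\
    (\sum_(T : {set V}) w T = 1)%R /\
    (forall v x, x \in L v ->
       (\sum_(T : {set V} | x \in T) w T = (#|L v|%:R)^-1)%R).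

(* Main.v *)
Require Import Defs.
From HB Require Import structures.
From mathcomp Require Import all_boot all_order all_algebra.
From mathcomp Require Import reals zify ring.
Set Implicit Arguments. Unset Strict Implicit. Unset Printing Implicit Defensive.
Import Order.TTheory GRing.Theory Num.Theory.

Inductive mseg := MD of seq nat | MR of nat & nat & nat & nat.
Record pt := Pt { pa : nat; pb : nat; pc : nat; ps1 : bool; ps2 : bool; ps3 : bool }.

Definition mseg_eqb (k1 k2 : mseg) : bool :=
  match k1, k2 with
  | MD p, MD p' => p == p'
  | MR a b c d, MR a' b' c' d' => [&& a == a', b == b', c == c' & d == d']
  | _, _ => false
  end.
Definition table : seq (mseg * mseg * mseg * seq pt) := [::
  (MD [:: 0; 1; 2], MD [:: 0; 1; 2], MD [:: 0; 1; 2], [:: Pt 0 1 2 false false false; Pt 0 1 2 false false false; Pt 1 2 0 false false false; Pt 1 2 0 true true true; Pt 2 0 1 true true true; Pt 2 0 1 true true true]);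
  (MD [:: 0; 1; 2], MD [:: 0; 1; 2], MD [:: 0; 2; 1], [:: Pt 0 1 2 false false false; Pt 0 2 1 false false false; Pt 1 0 1 false false false; Pt 1 2 0 true true true; Pt 2 0 2 true true true; Pt 2 1 0 true true true]);
  (MD [:: 0; 1; 2], MD [:: 0; 1; 2], MD [:: 1; 0; 2], [:: Pt 0 1 2 false false false; Pt 0 2 0 false false false; Pt 1 0 2 false false false; Pt 1 2 1 true true true; Pt 2 0 1 true true true; Pt 2 1 0 true true true]);
  (MD [:: 0; 1; 2], MD [:: 0; 1; 2], MD [:: 1; 2; 0], [:: Pt 0 1 0 false false false; Pt 0 1 0 false false false; Pt 1 2 1 false false false; Pt 1 2 1 true true true; Pt 2 0 2 true true true; Pt 2 0 2 true true true]);
  (MD [:: 0; 1; 2], MD [:: 0; 1; 2], MD [:: 2; 0; 1], [:: Pt 0 1 0 false false false; Pt 0 1 0 false false false; Pt 1 2 1 false false false; Pt 1 2 1 true true true; Pt 2 0 2 true true true; Pt 2 0 2 true true true]);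
  (MD [:: 0; 1; 2], MD [:: 0; 1; 2], MD [:: 2; 1; 0], [:: Pt 0 1 0 false false false; Pt 0 2 1 false false false; Pt 1 0 2 false false false; Pt 1 2 0 true true true; Pt 2 0 1 true true true; Pt 2 1 2 true true true]);
  (MD [:: 0; 1; 2], MD [:: 0; 1; 2], MR 0 1 0 1, [:: Pt 0 1 0 false false true; Pt 0 1 0 false false true; Pt 1 2 1 false false false; Pt 1 2 1 true true false; Pt 2 0 2 true true false; Pt 2 0 2 true true true]);
  (MD [:: 0; 1; 2], MD [:: 0; 1; 2], MR 0 1 0 2, [:: Pt 0 1 0 false false true; Pt 0 1 2 false false true; Pt 1 2 0 false false true; Pt 1 2 1 true true false; Pt 2 0 1 true true false; Pt 2 0 2 true true false]);
  (MD [:: 0; 1; 2], MD [:: 0; 1; 2], MR 0 1 1 0, [:: Pt 0 1 2 false false false; Pt 0 2 1 false false false; Pt 1 0 2 false false true; Pt 1 2 0 true true true; Pt 2 0 1 true true false; Pt 2 1 0 true true true]);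
  (MD [:: 0; 1; 2], MD [:: 0; 1; 2], MR 0 1 1 2, [:: Pt 0 1 0 false false true; Pt 0 2 1 false false false; Pt 1 0 2 false false true; Pt 1 2 0 true true true; Pt 2 0 1 true true false; Pt 2 1 2 true true false]);
  (MD [:: 0; 1; 2], MD [:: 0; 1; 2], MR 0 1 2 0, [:: Pt 0 1 2 false false false; Pt 0 2 1 false false false; Pt 1 0 1 false false false; Pt 1 2 0 true true true; Pt 2 0 2 true true true; Pt 2 1 0 true true true]);
  (MD [:: 0; 1; 2], MD [:: 0; 1; 2], MR 0 1 2 1, [:: Pt 0 1 0 false false true; Pt 0 2 1 false false false; Pt 1 0 2 false false false; Pt 1 2 1 true true false; Pt 2 0 2 true true true; Pt 2 1 0 true true true]);
  (MD [:: 0; 1; 2], MD [:: 0; 1; 2], MR 0 2 0 1, [:: Pt 0 1 0 false false true; Pt 0 2 0 false false true; Pt 1 0 2 false false false; Pt 1 2 1 true true false; Pt 2 0 1 true true true; Pt 2 1 2 true true false]);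
  (MD [:: 0; 1; 2], MD [:: 0; 1; 2], MR 0 2 0 2, [:: Pt 0 1 0 false false true; Pt 0 1 0 false false true; Pt 1 2 1 false false false; Pt 1 2 1 true true true; Pt 2 0 2 true true false; Pt 2 0 2 true true false]);
  (MD [:: 0; 1; 2], MD [:: 0; 1; 2], MR 0 2 1 0, [:: Pt 0 1 2 false false false; Pt 0 1 2 false false false; Pt 1 2 0 false false true; Pt 1 2 0 true true true; Pt 2 0 1 true true false; Pt 2 0 1 true true true]);
  (MD [:: 0; 1; 2], MD [:: 0; 1; 2], MR 0 2 1 2, [:: Pt 0 1 0 false false true; Pt 0 1 2 false false false; Pt 1 2 0 false false true; Pt 1 2 1 true true true; Pt 2 0 1 true true false; Pt 2 0 2 true true false]);
  (MD [:: 0; 1; 2], MD [:: 0; 1; 2], MR 0 2 2 0, [:: Pt 0 1 2 false false false; Pt 0 2 1 false false false; Pt 1 0 2 false false false; Pt 1 2 0 true true true; Pt 2 0 1 true true true; Pt 2 1 0 true true true]);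
  (MD [:: 0; 1; 2], MD [:: 0; 1; 2], MR 0 2 2 1, [:: Pt 0 1 2 false false false; Pt 0 2 0 false false true; Pt 1 0 2 false false false; Pt 1 2 1 true true false; Pt 2 0 1 true true true; Pt 2 1 0 true true true]);
  (MD [:: 0; 1; 2], MD [:: 0; 1; 2], MR 1 2 0 1, [:: Pt 0 1 0 false false true; Pt 0 2 1 false false true; Pt 1 0 2 false false false; Pt 1 2 0 true true false; Pt 2 0 1 true true true; Pt 2 1 2 true true false]);
  (MD [:: 0; 1; 2], MD [:: 0; 1; 2], MR 1 2 0 2, [:: Pt 0 1 0 false false true; Pt 0 2 1 false false true; Pt 1 0 1 false false true; Pt 1 2 0 true true false; Pt 2 0 2 true true false; Pt 2 1 2 true true false]);
  (MD [:: 0; 1; 2], MD [:: 0; 1; 2], MR 1 2 1 0, [:: Pt 0 1 0 false false false; Pt 0 1 2 false false false; Pt 1 2 0 false false true; Pt 1 2 1 true true true; Pt 2 0 1 true true true; Pt 2 0 2 true true false]);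
  (MD [:: 0; 1; 2], MD [:: 0; 1; 2], MR 1 2 1 2, [:: Pt 0 1 0 false false false; Pt 0 1 0 false false true; Pt 1 2 1 false false true; Pt 1 2 1 true true true; Pt 2 0 2 true true false; Pt 2 0 2 true true false]);
  (MD [:: 0; 1; 2], MD [:: 0; 1; 2], MR 1 2 2 0, [:: Pt 0 1 2 false false false; Pt 0 1 2 false false false; Pt 1 2 0 false false false; Pt 1 2 0 true true true; Pt 2 0 1 true true true; Pt 2 0 1 true true true]);
  (MD [:: 0; 1; 2], MD [:: 0; 1; 2], MR 1 2 2 1, [:: Pt 0 1 2 false false false; Pt 0 2 1 false false true; Pt 1 0 2 false false false; Pt 1 2 0 true true false; Pt 2 0 1 true true true; Pt 2 1 0 true true true]);
  (MD [:: 0; 1; 2], MR 0 1 0 1, MD [:: 0; 1; 2], [:: Pt 0 1 1 false false false; Pt 0 1 1 false false false; Pt 1 2 2 false false false; Pt 1 2 2 true true true; Pt 2 0 0 true true true; Pt 2 0 0 true true true]);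
  (MD [:: 0; 1; 2], MR 0 1 0 1, MD [:: 0; 2; 1], [:: Pt 0 1 1 false false false; Pt 0 1 2 false false false; Pt 1 2 0 false true false; Pt 1 2 1 true false true; Pt 2 0 0 true true true; Pt 2 0 2 true true true]);
  (MD [:: 0; 1; 2], MR 0 1 0 1, MD [:: 1; 0; 2], [:: Pt 0 1 2 false false false; Pt 0 2 0 false true false; Pt 1 0 2 false true false; Pt 1 2 1 true false true; Pt 2 0 0 true true true; Pt 2 1 1 true false true]);
  (MD [:: 0; 1; 2], MR 0 1 0 1, MD [:: 1; 2; 0], [:: Pt 0 1 1 false false false; Pt 0 1 1 false false false; Pt 1 2 2 false false false; Pt 1 2 2 true true true; Pt 2 0 0 true true true; Pt 2 0 0 true true true]);
  (MD [:: 0; 1; 2], MR 0 1 0 1, MD [:: 2; 0; 1], [:: Pt 0 1 2 false false false; Pt 0 2 0 false true false; Pt 1 0 0 false true false; Pt 1 2 1 true false true; Pt 2 0 2 true true true; Pt 2 1 1 true false true]);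
  (MD [:: 0; 1; 2], MR 0 1 0 1, MD [:: 2; 1; 0], [:: Pt 0 1 1 false false false; Pt 0 2 0 false true false; Pt 1 0 0 false true false; Pt 1 2 2 true false true; Pt 2 0 2 true true true; Pt 2 1 1 true false true]);
  (MD [:: 0; 1; 2], MR 0 1 0 1, MR 0 1 0 1, [:: Pt 0 1 2 false false true; Pt 0 2 0 false true true; Pt 1 0 2 false true false; Pt 1 2 1 true false false; Pt 2 0 0 true true true; Pt 2 1 1 true false false]);
  (MD [:: 0; 1; 2], MR 0 1 0 1, MR 0 1 0 2, [:: Pt 0 1 2 false false true; Pt 0 2 0 false true true; Pt 1 0 0 false true true; Pt 1 2 1 true false false; Pt 2 0 2 true true false; Pt 2 1 1 true false false]);
  (MD [:: 0; 1; 2], MR 0 1 0 1, MR 0 1 1 0, [:: Pt 0 1 1 false false false; Pt 0 1 1 false false false; Pt 1 2 0 false true true; Pt 1 2 2 true false true; Pt 2 0 0 true true true; Pt 2 0 2 true true false]);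
  (MD [:: 0; 1; 2], MR 0 1 0 1, MR 0 1 1 2, [:: Pt 0 1 1 false false false; Pt 0 2 0 false true true; Pt 1 0 0 false true true; Pt 1 2 2 true false true; Pt 2 0 2 true true false; Pt 2 1 1 true false false]);
  (MD [:: 0; 1; 2], MR 0 1 0 1, MR 0 1 2 0, [:: Pt 0 1 1 false false false; Pt 0 1 1 false false false; Pt 1 2 0 false true true; Pt 1 2 2 true false false; Pt 2 0 0 true true true; Pt 2 0 2 true true true]);
  (MD [:: 0; 1; 2], MR 0 1 0 1, MR 0 1 2 1, [:: Pt 0 1 1 false false false; Pt 0 1 2 false false true; Pt 1 2 1 false false false; Pt 1 2 2 true true false; Pt 2 0 0 true true true; Pt 2 0 0 true true true]);
  (MD [:: 0; 1; 2], MR 0 1 0 1, MR 0 2 0 1, [:: Pt 0 1 1 false false true; Pt 0 2 0 false true true; Pt 1 0 2 false true false; Pt 1 2 1 true false false; Pt 2 0 0 true true true; Pt 2 1 2 true false false]);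
  (MD [:: 0; 1; 2], MR 0 1 0 1, MR 0 2 0 2, [:: Pt 0 1 1 false false true; Pt 0 2 0 false true true; Pt 1 0 0 false true true; Pt 1 2 1 true false false; Pt 2 0 2 true true false; Pt 2 1 2 true false false]);
  (MD [:: 0; 1; 2], MR 0 1 0 1, MR 0 2 1 0, [:: Pt 0 1 1 false false false; Pt 0 1 2 false false false; Pt 1 2 0 false true true; Pt 1 2 1 true false true; Pt 2 0 0 true true true; Pt 2 0 2 true true false]);
  (MD [:: 0; 1; 2], MR 0 1 0 1, MR 0 2 1 2, [:: Pt 0 1 1 false false false; Pt 0 2 0 false true true; Pt 1 0 0 false true true; Pt 1 2 1 true false true; Pt 2 0 2 true true false; Pt 2 1 2 true false false]);
  (MD [:: 0; 1; 2], MR 0 1 0 1, MR 0 2 2 0, [:: Pt 0 1 1 false false false; Pt 0 1 2 false false false; Pt 1 2 1 false false true; Pt 1 2 2 true true false; Pt 2 0 0 true true true; Pt 2 0 0 true true true]);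
  (MD [:: 0; 1; 2], MR 0 1 0 1, MR 0 2 2 1, [:: Pt 0 1 1 false false false; Pt 0 1 1 false false true; Pt 1 2 2 false false false; Pt 1 2 2 true true false; Pt 2 0 0 true true true; Pt 2 0 0 true true true]);
  (MD [:: 0; 1; 2], MR 0 1 0 1, MR 1 2 0 1, [:: Pt 0 1 1 false false true; Pt 0 1 1 false false true; Pt 1 2 0 false true false; Pt 1 2 2 true false false; Pt 2 0 0 true true true; Pt 2 0 2 true true false]);
  (MD [:: 0; 1; 2], MR 0 1 0 1, MR 1 2 0 2, [:: Pt 0 1 1 false false true; Pt 0 1 1 false false true; Pt 1 2 0 false true true; Pt 1 2 2 true false false; Pt 2 0 0 true true false; Pt 2 0 2 true true false]);
  (MD [:: 0; 1; 2], MR 0 1 0 1, MR 1 2 1 0, [:: Pt 0 1 2 false false false; Pt 0 2 0 false true false; Pt 1 0 0 false true true; Pt 1 2 1 true false true; Pt 2 0 2 true true false; Pt 2 1 1 true false true]);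
  (MD [:: 0; 1; 2], MR 0 1 0 1, MR 1 2 1 2, [:: Pt 0 1 1 false false true; Pt 0 1 2 false false false; Pt 1 2 0 false true true; Pt 1 2 1 true false true; Pt 2 0 0 true true false; Pt 2 0 2 true true false]);
  (MD [:: 0; 1; 2], MR 0 1 0 1, MR 1 2 2 0, [:: Pt 0 1 2 false false false; Pt 0 2 0 false true false; Pt 1 0 2 false true false; Pt 1 2 1 true false true; Pt 2 0 0 true true true; Pt 2 1 1 true false true]);
  (MD [:: 0; 1; 2], MR 0 1 0 1, MR 1 2 2 1, [:: Pt 0 1 1 false false true; Pt 0 2 0 false true false; Pt 1 0 2 false true false; Pt 1 2 2 true false false; Pt 2 0 0 true true true; Pt 2 1 1 true false true]);
  (MD [:: 0; 1; 2], MR 0 2 0 1, MD [:: 0; 1; 2], [:: Pt 0 1 1 false false false; Pt 0 2 1 false false false; Pt 1 0 2 false true false; Pt 1 2 2 true false true; Pt 2 0 0 true true true; Pt 2 1 0 true true true]);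
  (MD [:: 0; 1; 2], MR 0 2 0 1, MD [:: 0; 2; 1], [:: Pt 0 1 1 false false false; Pt 0 2 2 false false false; Pt 1 0 0 false true false; Pt 1 2 1 true false true; Pt 2 0 0 true true true; Pt 2 1 2 true true true]);
  (MD [:: 0; 1; 2], MR 0 2 0 1, MD [:: 1; 0; 2], [:: Pt 0 1 0 false true false; Pt 0 2 2 false false false; Pt 1 0 2 false true false; Pt 1 2 1 true false true; Pt 2 0 0 true true true; Pt 2 1 1 true false true]);
  (MD [:: 0; 1; 2], MR 0 2 0 1, MD [:: 1; 2; 0], [:: Pt 0 1 0 false true false; Pt 0 1 1 false false false; Pt 1 2 1 false false false; Pt 1 2 2 true false true; Pt 2 0 0 true true true; Pt 2 0 2 true true true]);
  (MD [:: 0; 1; 2], MR 0 2 0 1, MD [:: 2; 0; 1], [:: Pt 0 1 0 false true false; Pt 0 2 2 false false false; Pt 1 0 0 false true false; Pt 1 2 1 true false true; Pt 2 0 2 true true true; Pt 2 1 1 true false true]);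
  (MD [:: 0; 1; 2], MR 0 2 0 1, MD [:: 2; 1; 0], [:: Pt 0 1 0 false true false; Pt 0 2 1 false false false; Pt 1 0 0 false true false; Pt 1 2 2 true false true; Pt 2 0 2 true true true; Pt 2 1 1 true false true]);
  (MD [:: 0; 1; 2], MR 0 2 0 1, MR 0 1 0 1, [:: Pt 0 1 0 false true true; Pt 0 1 2 false false true; Pt 1 2 1 false false false; Pt 1 2 1 true false false; Pt 2 0 0 true true true; Pt 2 0 2 true true false]);
  (MD [:: 0; 1; 2], MR 0 2 0 1, MR 0 1 0 2, [:: Pt 0 1 0 false true true; Pt 0 2 2 false false true; Pt 1 0 0 false true true; Pt 1 2 1 true false false; Pt 2 0 2 true true false; Pt 2 1 1 true false false]);
  (MD [:: 0; 1; 2], MR 0 2 0 1, MR 0 1 1 0, [:: Pt 0 1 1 false false false; Pt 0 2 1 false false false; Pt 1 0 0 false true true; Pt 1 2 2 true false true; Pt 2 0 0 true true true; Pt 2 1 2 true true false]);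
  (MD [:: 0; 1; 2], MR 0 2 0 1, MR 0 1 1 2, [:: Pt 0 1 0 false true true; Pt 0 2 1 false false false; Pt 1 0 0 false true true; Pt 1 2 2 true false true; Pt 2 0 2 true true false; Pt 2 1 1 true false false]);
  (MD [:: 0; 1; 2], MR 0 2 0 1, MR 0 1 2 0, [:: Pt 0 1 1 false false false; Pt 0 1 2 false true false; Pt 1 2 1 false false false; Pt 1 2 2 true false true; Pt 2 0 0 true true true; Pt 2 0 0 true true true]);
  (MD [:: 0; 1; 2], MR 0 2 0 1, MR 0 1 2 1, [:: Pt 0 1 0 false true true; Pt 0 1 1 false false false; Pt 1 2 1 false false false; Pt 1 2 2 true false false; Pt 2 0 0 true true true; Pt 2 0 2 true true true]);
  (MD [:: 0; 1; 2], MR 0 2 0 1, MR 0 2 0 1, [:: Pt 0 1 0 false true true; Pt 0 1 1 false false true; Pt 1 2 1 false false false; Pt 1 2 2 true false false; Pt 2 0 0 true true true; Pt 2 0 2 true true false]);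
  (MD [:: 0; 1; 2], MR 0 2 0 1, MR 0 2 0 2, [:: Pt 0 1 0 false true true; Pt 0 2 1 false false true; Pt 1 0 0 false true true; Pt 1 2 1 true false false; Pt 2 0 2 true true false; Pt 2 1 2 true false false]);
  (MD [:: 0; 1; 2], MR 0 2 0 1, MR 0 2 1 0, [:: Pt 0 1 1 false false false; Pt 0 2 2 false false false; Pt 1 0 0 false true true; Pt 1 2 1 true false true; Pt 2 0 0 true true true; Pt 2 1 2 true true false]);
  (MD [:: 0; 1; 2], MR 0 2 0 1, MR 0 2 1 2, [:: Pt 0 1 0 false true true; Pt 0 2 1 false false false; Pt 1 0 0 false true true; Pt 1 2 1 true false true; Pt 2 0 2 true true false; Pt 2 1 2 true false false]);
  (MD [:: 0; 1; 2], MR 0 2 0 1, MR 0 2 2 0, [:: Pt 0 1 1 false false false; Pt 0 1 2 false true false; Pt 1 2 1 false false true; Pt 1 2 2 true false false; Pt 2 0 0 true true true; Pt 2 0 0 true true true]);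
  (MD [:: 0; 1; 2], MR 0 2 0 1, MR 0 2 2 1, [:: Pt 0 1 0 false true true; Pt 0 2 1 false false false; Pt 1 0 2 false true false; Pt 1 2 2 true false false; Pt 2 0 0 true true true; Pt 2 1 1 true false true]);
  (MD [:: 0; 1; 2], MR 0 2 0 1, MR 1 2 0 1, [:: Pt 0 1 0 false true true; Pt 0 2 1 false false true; Pt 1 0 0 false true false; Pt 1 2 2 true false false; Pt 2 0 2 true true false; Pt 2 1 1 true false true]);
  (MD [:: 0; 1; 2], MR 0 2 0 1, MR 1 2 0 2, [:: Pt 0 1 0 false true true; Pt 0 1 1 false false true; Pt 1 2 1 false false true; Pt 1 2 2 true false false; Pt 2 0 0 true true false; Pt 2 0 2 true true false]);
  (MD [:: 0; 1; 2], MR 0 2 0 1, MR 1 2 1 0, [:: Pt 0 1 0 false true false; Pt 0 1 2 false false false; Pt 1 2 1 false false true; Pt 1 2 1 true false true; Pt 2 0 0 true true true; Pt 2 0 2 true true false]);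
  (MD [:: 0; 1; 2], MR 0 2 0 1, MR 1 2 1 2, [:: Pt 0 1 0 false true false; Pt 0 2 1 false false true; Pt 1 0 0 false true true; Pt 1 2 1 true false true; Pt 2 0 2 true true false; Pt 2 1 2 true false false]);
  (MD [:: 0; 1; 2], MR 0 2 0 1, MR 1 2 2 0, [:: Pt 0 1 0 false true false; Pt 0 2 2 false false false; Pt 1 0 2 false true false; Pt 1 2 1 true false true; Pt 2 0 0 true true true; Pt 2 1 1 true false true]);
  (MD [:: 0; 1; 2], MR 0 2 0 1, MR 1 2 2 1, [:: Pt 0 1 0 false true false; Pt 0 2 1 false false true; Pt 1 0 2 false true false; Pt 1 2 2 true false false; Pt 2 0 0 true true true; Pt 2 1 1 true false true]);
  (MD [:: 0; 1; 2], MR 1 2 0 1, MD [:: 0; 1; 2], [:: Pt 0 1 2 false true false; Pt 0 2 1 false false false; Pt 1 0 0 false true false; Pt 1 2 2 true false true; Pt 2 0 1 true false true; Pt 2 1 0 true true true]);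
  (MD [:: 0; 1; 2], MR 1 2 0 1, MD [:: 0; 2; 1], [:: Pt 0 1 2 false true false; Pt 0 2 1 false false false; Pt 1 0 0 false true false; Pt 1 2 1 true false true; Pt 2 0 2 true false true; Pt 2 1 0 true true true]);
  (MD [:: 0; 1; 2], MR 1 2 0 1, MD [:: 1; 0; 2], [:: Pt 0 1 0 false true false; Pt 0 1 2 false true false; Pt 1 2 1 false false false; Pt 1 2 2 true false true; Pt 2 0 0 true true true; Pt 2 0 1 true false true]);
  (MD [:: 0; 1; 2], MR 1 2 0 1, MD [:: 1; 2; 0], [:: Pt 0 1 0 false true false; Pt 0 1 0 false true false; Pt 1 2 1 false false false; Pt 1 2 1 true false true; Pt 2 0 2 true false true; Pt 2 0 2 true true true]);
  (MD [:: 0; 1; 2], MR 1 2 0 1, MD [:: 2; 0; 1], [:: Pt 0 1 0 false true false; Pt 0 1 0 false true false; Pt 1 2 1 false false false; Pt 1 2 1 true false true; Pt 2 0 2 true false true; Pt 2 0 2 true true true]);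
  (MD [:: 0; 1; 2], MR 1 2 0 1, MD [:: 2; 1; 0], [:: Pt 0 1 0 false true false; Pt 0 2 1 false false false; Pt 1 0 0 false true false; Pt 1 2 2 true false true; Pt 2 0 1 true false true; Pt 2 1 2 true true true]);
  (MD [:: 0; 1; 2], MR 1 2 0 1, MR 0 1 0 1, [:: Pt 0 1 0 false true true; Pt 0 1 0 false true true; Pt 1 2 1 false false false; Pt 1 2 1 true false false; Pt 2 0 2 true false false; Pt 2 0 2 true true true]);
  (MD [:: 0; 1; 2], MR 1 2 0 1, MR 0 1 0 2, [:: Pt 0 1 0 false true true; Pt 0 1 0 false true true; Pt 1 2 1 false false false; Pt 1 2 2 true false true; Pt 2 0 1 true false false; Pt 2 0 2 true true false]);
  (MD [:: 0; 1; 2], MR 1 2 0 1, MR 0 1 1 0, [:: Pt 0 1 2 false true false; Pt 0 2 1 false false false; Pt 1 0 0 false true true; Pt 1 2 2 true false true; Pt 2 0 1 true false false; Pt 2 1 0 true true true]);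
  (MD [:: 0; 1; 2], MR 1 2 0 1, MR 0 1 1 2, [:: Pt 0 1 0 false true true; Pt 0 2 1 false false false; Pt 1 0 0 false true true; Pt 1 2 2 true false true; Pt 2 0 1 true false false; Pt 2 1 2 true true false]);
  (MD [:: 0; 1; 2], MR 1 2 0 1, MR 0 1 2 0, [:: Pt 0 1 2 false true false; Pt 0 2 1 false false false; Pt 1 0 0 false true true; Pt 1 2 1 true false false; Pt 2 0 2 true false true; Pt 2 1 0 true true true]);
  (MD [:: 0; 1; 2], MR 1 2 0 1, MR 0 1 2 1, [:: Pt 0 1 0 false true true; Pt 0 1 2 false true false; Pt 1 2 1 false false false; Pt 1 2 1 true false false; Pt 2 0 0 true true true; Pt 2 0 2 true false true]);
  (MD [:: 0; 1; 2], MR 1 2 0 1, MR 0 2 0 1, [:: Pt 0 1 0 false true true; Pt 0 1 0 false true true; Pt 1 2 1 false false false; Pt 1 2 2 true false false; Pt 2 0 1 true false true; Pt 2 0 2 true true false]);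
  (MD [:: 0; 1; 2], MR 1 2 0 1, MR 0 2 0 2, [:: Pt 0 1 0 false true true; Pt 0 1 0 false true true; Pt 1 2 1 false false false; Pt 1 2 1 true false true; Pt 2 0 2 true false false; Pt 2 0 2 true true false]);
  (MD [:: 0; 1; 2], MR 1 2 0 1, MR 0 2 1 0, [:: Pt 0 1 2 false true false; Pt 0 2 1 false false false; Pt 1 0 0 false true true; Pt 1 2 1 true false true; Pt 2 0 2 true false false; Pt 2 1 0 true true true]);
  (MD [:: 0; 1; 2], MR 1 2 0 1, MR 0 2 1 2, [:: Pt 0 1 0 false true true; Pt 0 2 1 false false false; Pt 1 0 0 false true true; Pt 1 2 1 true false true; Pt 2 0 2 true false false; Pt 2 1 2 true true false]);
  (MD [:: 0; 1; 2], MR 1 2 0 1, MR 0 2 2 0, [:: Pt 0 1 2 false true false; Pt 0 2 1 false false false; Pt 1 0 0 false true true; Pt 1 2 2 true false false; Pt 2 0 1 true false true; Pt 2 1 0 true true true]);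
  (MD [:: 0; 1; 2], MR 1 2 0 1, MR 0 2 2 1, [:: Pt 0 1 0 false true true; Pt 0 1 2 false true false; Pt 1 2 1 false false false; Pt 1 2 2 true false false; Pt 2 0 0 true true true; Pt 2 0 1 true false true]);
  (MD [:: 0; 1; 2], MR 1 2 0 1, MR 1 2 0 1, [:: Pt 0 1 0 false true true; Pt 0 2 1 false false true; Pt 1 0 0 false true false; Pt 1 2 2 true false false; Pt 2 0 1 true false true; Pt 2 1 2 true true false]);
  (MD [:: 0; 1; 2], MR 1 2 0 1, MR 1 2 0 2, [:: Pt 0 1 0 false true true; Pt 0 2 1 false false true; Pt 1 0 0 false true false; Pt 1 2 1 true false true; Pt 2 0 2 true false false; Pt 2 1 2 true true false]);
  (MD [:: 0; 1; 2], MR 1 2 0 1, MR 1 2 1 0, [:: Pt 0 1 0 false true false; Pt 0 1 2 false true false; Pt 1 2 1 false false true; Pt 1 2 1 true false true; Pt 2 0 0 true true true; Pt 2 0 2 true false false]);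
  (MD [:: 0; 1; 2], MR 1 2 0 1, MR 1 2 1 2, [:: Pt 0 1 0 false true false; Pt 0 1 0 false true true; Pt 1 2 1 false false true; Pt 1 2 1 true false true; Pt 2 0 2 true false false; Pt 2 0 2 true true false]);
  (MD [:: 0; 1; 2], MR 1 2 0 1, MR 1 2 2 0, [:: Pt 0 1 0 false true false; Pt 0 1 2 false true false; Pt 1 2 1 false false true; Pt 1 2 2 true false false; Pt 2 0 0 true true true; Pt 2 0 1 true false true]);
  (MD [:: 0; 1; 2], MR 1 2 0 1, MR 1 2 2 1, [:: Pt 0 1 0 false true false; Pt 0 2 1 false false true; Pt 1 0 2 false true false; Pt 1 2 2 true false false; Pt 2 0 1 true false true; Pt 2 1 0 true true true]);
  (MR 0 1 0 1, MD [:: 0; 1; 2], MD [:: 0; 1; 2], [:: Pt 0 0 1 true false false; Pt 0 0 1 true false false; Pt 1 1 2 false false false; Pt 1 1 2 false true true; Pt 2 2 0 false true true; Pt 2 2 0 true true true]);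
  (MR 0 1 0 1, MD [:: 0; 1; 2], MD [:: 0; 2; 1], [:: Pt 0 0 1 true false false; Pt 0 0 2 true false false; Pt 1 1 0 false false false; Pt 1 2 1 false true true; Pt 2 1 2 false true true; Pt 2 2 0 true true true]);
  (MR 0 1 0 1, MD [:: 0; 1; 2], MD [:: 1; 0; 2], [:: Pt 0 0 2 true false false; Pt 0 2 0 true false false; Pt 1 1 2 false false false; Pt 1 2 1 false true true; Pt 2 0 1 true true true; Pt 2 1 0 false true true]);
  (MR 0 1 0 1, MD [:: 0; 1; 2], MD [:: 1; 2; 0], [:: Pt 0 0 1 true false false; Pt 0 0 1 true false false; Pt 1 1 2 false false false; Pt 1 1 2 false true true; Pt 2 2 0 false true true; Pt 2 2 0 true true true]);
  (MR 0 1 0 1, MD [:: 0; 1; 2], MD [:: 2; 0; 1], [:: Pt 0 0 2 true false false; Pt 0 0 2 true false false; Pt 1 1 0 false false false; Pt 1 1 0 false true true; Pt 2 2 1 false true true; Pt 2 2 1 true true true]);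
  (MR 0 1 0 1, MD [:: 0; 1; 2], MD [:: 2; 1; 0], [:: Pt 0 0 1 true false false; Pt 0 2 0 true false false; Pt 1 1 0 false false false; Pt 1 1 2 false true true; Pt 2 0 2 true true true; Pt 2 2 1 false true true]);
  (MR 0 1 0 1, MD [:: 0; 1; 2], MR 0 1 0 1, [:: Pt 0 0 2 true false true; Pt 0 2 0 true false true; Pt 1 1 2 false false false; Pt 1 2 1 false true false; Pt 2 0 1 true true false; Pt 2 1 0 false true true]);
  (MR 0 1 0 1, MD [:: 0; 1; 2], MR 0 1 0 2, [:: Pt 0 0 2 true false true; Pt 0 2 0 true false true; Pt 1 1 0 false false true; Pt 1 1 2 false true false; Pt 2 0 1 true true false; Pt 2 2 1 false true false]);
  (MR 0 1 0 1, MD [:: 0; 1; 2], MR 0 1 1 0, [:: Pt 0 0 1 true false false; Pt 0 0 1 true false false; Pt 1 1 2 false false true; Pt 1 2 0 false true true; Pt 2 1 2 false true false; Pt 2 2 0 true true true]);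
  (MR 0 1 0 1, MD [:: 0; 1; 2], MR 0 1 1 2, [:: Pt 0 0 1 true false false; Pt 0 0 2 true false true; Pt 1 1 0 false false true; Pt 1 2 0 false true true; Pt 2 1 2 false true false; Pt 2 2 1 true true false]);
  (MR 0 1 0 1, MD [:: 0; 1; 2], MR 0 1 2 0, [:: Pt 0 0 1 true false false; Pt 0 0 1 true false false; Pt 1 1 2 false false false; Pt 1 1 2 false true true; Pt 2 2 0 false true true; Pt 2 2 0 true true true]);
  (MR 0 1 0 1, MD [:: 0; 1; 2], MR 0 1 2 1, [:: Pt 0 0 1 true false false; Pt 0 0 2 true false true; Pt 1 1 2 false false false; Pt 1 2 1 false true false; Pt 2 1 0 false true true; Pt 2 2 0 true true true]);
  (MR 0 1 0 1, MD [:: 0; 1; 2], MR 0 2 0 1, [:: Pt 0 0 1 true false true; Pt 0 2 0 true false true; Pt 1 1 2 false false false; Pt 1 1 2 false true false; Pt 2 0 1 true true false; Pt 2 2 0 false true true]);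
  (MR 0 1 0 1, MD [:: 0; 1; 2], MR 0 2 0 2, [:: Pt 0 0 1 true false true; Pt 0 2 0 true false true; Pt 1 1 0 false false true; Pt 1 1 2 false true false; Pt 2 0 2 true true false; Pt 2 2 1 false true false]);
  (MR 0 1 0 1, MD [:: 0; 1; 2], MR 0 2 1 0, [:: Pt 0 0 1 true false false; Pt 0 0 2 true false false; Pt 1 1 0 false false true; Pt 1 2 0 false true true; Pt 2 1 2 false true false; Pt 2 2 1 true true true]);
  (MR 0 1 0 1, MD [:: 0; 1; 2], MR 0 2 1 2, [:: Pt 0 0 1 true false false; Pt 0 2 0 true false true; Pt 1 1 0 false false true; Pt 1 2 1 false true true; Pt 2 0 2 true true false; Pt 2 1 2 false true false]);
  (MR 0 1 0 1, MD [:: 0; 1; 2], MR 0 2 2 0, [:: Pt 0 0 1 true false false; Pt 0 0 2 true false false; Pt 1 1 0 false false true; Pt 1 1 2 false true false; Pt 2 2 0 false true true; Pt 2 2 1 true true true]);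
  (MR 0 1 0 1, MD [:: 0; 1; 2], MR 0 2 2 1, [:: Pt 0 0 1 true false false; Pt 0 0 1 true false true; Pt 1 1 2 false false false; Pt 1 1 2 false true false; Pt 2 2 0 false true true; Pt 2 2 0 true true true]);
  (MR 0 1 0 1, MD [:: 0; 1; 2], MR 1 2 0 1, [:: Pt 0 0 1 true false true; Pt 0 0 1 true false true; Pt 1 1 2 false false false; Pt 1 1 2 false true false; Pt 2 2 0 false true false; Pt 2 2 0 true true true]);
  (MR 0 1 0 1, MD [:: 0; 1; 2], MR 1 2 0 2, [:: Pt 0 0 1 true false true; Pt 0 0 1 true false true; Pt 1 1 2 false false false; Pt 1 2 0 false true true; Pt 2 1 2 false true false; Pt 2 2 0 true true false]);
  (MR 0 1 0 1, MD [:: 0; 1; 2], MR 1 2 1 0, [:: Pt 0 0 2 true false false; Pt 0 0 2 true false false; Pt 1 1 0 false false true; Pt 1 2 1 false true true; Pt 2 1 0 false true false; Pt 2 2 1 true true true]);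
  (MR 0 1 0 1, MD [:: 0; 1; 2], MR 1 2 1 2, [:: Pt 0 0 1 true false true; Pt 0 0 2 true false false; Pt 1 1 0 false false true; Pt 1 2 1 false true true; Pt 2 1 2 false true false; Pt 2 2 0 true true false]);
  (MR 0 1 0 1, MD [:: 0; 1; 2], MR 1 2 2 0, [:: Pt 0 0 2 true false false; Pt 0 0 2 true false false; Pt 1 1 0 false false false; Pt 1 1 0 false true true; Pt 2 2 1 false true true; Pt 2 2 1 true true true]);
  (MR 0 1 0 1, MD [:: 0; 1; 2], MR 1 2 2 1, [:: Pt 0 0 1 true false true; Pt 0 0 2 true false false; Pt 1 1 0 false false false; Pt 1 1 2 false true false; Pt 2 2 0 false true true; Pt 2 2 1 true true true]);
  (MR 0 1 0 1, MR 0 1 0 1, MD [:: 0; 1; 2], [:: Pt 0 0 2 true true false; Pt 0 2 1 true false false; Pt 1 1 2 false false false; Pt 1 2 0 false true true; Pt 2 0 0 true true true; Pt 2 1 1 false false true]);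
  (MR 0 1 0 1, MR 0 1 0 1, MD [:: 0; 2; 1], [:: Pt 0 0 2 true true false; Pt 0 2 1 true false false; Pt 1 1 1 false false false; Pt 1 2 0 false true true; Pt 2 0 0 true true true; Pt 2 1 2 false false true]);
  (MR 0 1 0 1, MR 0 1 0 1, MD [:: 1; 0; 2], [:: Pt 0 0 0 true true false; Pt 0 0 0 true true false; Pt 1 1 2 false false false; Pt 1 2 2 false true true; Pt 2 1 1 false false true; Pt 2 2 1 true false true]);
  (MR 0 1 0 1, MR 0 1 0 1, MD [:: 1; 2; 0], [:: Pt 0 0 0 true true false; Pt 0 0 0 true true false; Pt 1 1 1 false false false; Pt 1 1 1 false false true; Pt 2 2 2 false false true; Pt 2 2 2 true true true]);
  (MR 0 1 0 1, MR 0 1 0 1, MD [:: 2; 0; 1], [:: Pt 0 0 0 true true false; Pt 0 0 0 true true false; Pt 1 1 1 false false false; Pt 1 1 1 false false true; Pt 2 2 2 false false true; Pt 2 2 2 true true true]);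
  (MR 0 1 0 1, MR 0 1 0 1, MD [:: 2; 1; 0], [:: Pt 0 0 0 true true false; Pt 0 0 0 true true false; Pt 1 1 2 false false false; Pt 1 2 2 false true true; Pt 2 1 1 false false true; Pt 2 2 1 true false true]);
  (MR 0 1 0 1, MR 0 1 0 1, MR 0 1 0 1, [:: Pt 0 0 0 true true true; Pt 0 0 0 true true true; Pt 1 1 1 false false false; Pt 1 1 1 false false false; Pt 2 2 2 false false false; Pt 2 2 2 true true true]);
  (MR 0 1 0 1, MR 0 1 0 1, MR 0 1 0 2, [:: Pt 0 0 0 true true true; Pt 0 0 0 true true true; Pt 1 1 1 false false false; Pt 1 1 2 false false true; Pt 2 2 1 false false false; Pt 2 2 2 true true false]);
  (MR 0 1 0 1, MR 0 1 0 1, MR 0 1 1 0, [:: Pt 0 0 2 true true false; Pt 0 2 1 true false false; Pt 1 1 2 false false true; Pt 1 2 0 false true true; Pt 2 0 0 true true true; Pt 2 1 1 false false false]);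
  (MR 0 1 0 1, MR 0 1 0 1, MR 0 1 1 2, [:: Pt 0 0 0 true true true; Pt 0 0 2 true true false; Pt 1 1 2 false false true; Pt 1 2 0 false true true; Pt 2 1 1 false false false; Pt 2 2 1 true false false]);
  (MR 0 1 0 1, MR 0 1 0 1, MR 0 1 2 0, [:: Pt 0 0 2 true true false; Pt 0 2 1 true false false; Pt 1 1 1 false false false; Pt 1 1 2 false false true; Pt 2 0 0 true true true; Pt 2 2 0 false true true]);
  (MR 0 1 0 1, MR 0 1 0 1, MR 0 1 2 1, [:: Pt 0 0 0 true true true; Pt 0 0 2 true true false; Pt 1 1 1 false false false; Pt 1 1 1 false false false; Pt 2 2 0 false true true; Pt 2 2 2 true false true]);
  (MR 0 1 0 1, MR 0 1 0 1, MR 0 2 0 1, [:: Pt 0 0 0 true true true; Pt 0 0 0 true true true; Pt 1 1 1 false false false; Pt 1 1 2 false false false; Pt 2 2 1 false false true; Pt 2 2 2 true true false]);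
  (MR 0 1 0 1, MR 0 1 0 1, MR 0 2 0 2, [:: Pt 0 0 0 true true true; Pt 0 0 0 true true true; Pt 1 1 1 false false false; Pt 1 1 1 false false true; Pt 2 2 2 false false false; Pt 2 2 2 true true false]);
  (MR 0 1 0 1, MR 0 1 0 1, MR 0 2 1 0, [:: Pt 0 0 2 true true false; Pt 0 2 1 true false false; Pt 1 1 1 false false true; Pt 1 2 0 false true true; Pt 2 0 0 true true true; Pt 2 1 2 false false false]);
  (MR 0 1 0 1, MR 0 1 0 1, MR 0 2 1 2, [:: Pt 0 0 0 true true true; Pt 0 0 2 true true false; Pt 1 1 1 false false true; Pt 1 2 0 false true true; Pt 2 1 1 false false false; Pt 2 2 2 true false false]);
  (MR 0 1 0 1, MR 0 1 0 1, MR 0 2 2 0, [:: Pt 0 0 2 true true false; Pt 0 2 1 true false false; Pt 1 1 1 false false true; Pt 1 1 2 false false false; Pt 2 0 0 true true true; Pt 2 2 0 false true true]);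
  (MR 0 1 0 1, MR 0 1 0 1, MR 0 2 2 1, [:: Pt 0 0 0 true true true; Pt 0 0 2 true true false; Pt 1 1 1 false false false; Pt 1 1 2 false false false; Pt 2 2 0 false true true; Pt 2 2 1 true false true]);
  (MR 0 1 0 1, MR 0 1 0 1, MR 1 2 0 1, [:: Pt 0 0 0 true true true; Pt 0 2 1 true false true; Pt 1 1 2 false false false; Pt 1 2 0 false true false; Pt 2 0 2 true true false; Pt 2 1 1 false false true]);
  (MR 0 1 0 1, MR 0 1 0 1, MR 1 2 0 2, [:: Pt 0 0 0 true true true; Pt 0 2 1 true false true; Pt 1 1 1 false false true; Pt 1 1 2 false false false; Pt 2 0 0 true true false; Pt 2 2 2 false true false]);
  (MR 0 1 0 1, MR 0 1 0 1, MR 1 2 1 0, [:: Pt 0 0 0 true true false; Pt 0 0 2 true true false; Pt 1 1 1 false false true; Pt 1 1 1 false false true; Pt 2 2 0 false true true; Pt 2 2 2 true false false]);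
  (MR 0 1 0 1, MR 0 1 0 1, MR 1 2 1 2, [:: Pt 0 0 0 true true false; Pt 0 0 0 true true true; Pt 1 1 1 false false true; Pt 1 1 1 false false true; Pt 2 2 2 false false false; Pt 2 2 2 true true false]);
  (MR 0 1 0 1, MR 0 1 0 1, MR 1 2 2 0, [:: Pt 0 0 0 true true false; Pt 0 0 2 true true false; Pt 1 1 1 false false true; Pt 1 1 2 false false false; Pt 2 2 0 false true true; Pt 2 2 1 true false true]);
  (MR 0 1 0 1, MR 0 1 0 1, MR 1 2 2 1, [:: Pt 0 0 0 true true false; Pt 0 0 0 true true true; Pt 1 1 2 false false false; Pt 1 2 2 false true false; Pt 2 1 1 false false true; Pt 2 2 1 true false true]);
  (MR 0 1 0 1, MR 0 2 0 1, MD [:: 0; 1; 2], [:: Pt 0 0 2 true true false; Pt 0 2 1 true false false; Pt 1 1 0 false true false; Pt 1 1 2 false false true; Pt 2 0 0 true true true; Pt 2 2 1 false false true]);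
  (MR 0 1 0 1, MR 0 2 0 1, MD [:: 0; 2; 1], [:: Pt 0 0 2 true true false; Pt 0 2 1 true false false; Pt 1 1 0 false true false; Pt 1 1 1 false false true; Pt 2 0 0 true true true; Pt 2 2 2 false false true]);
  (MR 0 1 0 1, MR 0 2 0 1, MD [:: 1; 0; 2], [:: Pt 0 0 0 true true false; Pt 0 0 0 true true false; Pt 1 1 2 false false false; Pt 1 1 2 false true true; Pt 2 2 1 false false true; Pt 2 2 1 true false true]);
  (MR 0 1 0 1, MR 0 2 0 1, MD [:: 1; 2; 0], [:: Pt 0 0 0 true true false; Pt 0 0 0 true true false; Pt 1 1 1 false false false; Pt 1 2 1 false false true; Pt 2 1 2 false true true; Pt 2 2 2 true false true]);
  (MR 0 1 0 1, MR 0 2 0 1, MD [:: 2; 0; 1], [:: Pt 0 0 0 true true false; Pt 0 0 0 true true false; Pt 1 1 1 false false false; Pt 1 2 1 false false true; Pt 2 1 2 false true true; Pt 2 2 2 true false true]);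
  (MR 0 1 0 1, MR 0 2 0 1, MD [:: 2; 1; 0], [:: Pt 0 0 0 true true false; Pt 0 0 0 true true false; Pt 1 1 2 false false false; Pt 1 1 2 false true true; Pt 2 2 1 false false true; Pt 2 2 1 true false true]);
  (MR 0 1 0 1, MR 0 2 0 1, MR 0 1 0 1, [:: Pt 0 0 0 true true true; Pt 0 0 0 true true true; Pt 1 1 1 false false false; Pt 1 1 2 false true false; Pt 2 2 1 false false false; Pt 2 2 2 true false true]);
  (MR 0 1 0 1, MR 0 2 0 1, MR 0 1 0 2, [:: Pt 0 0 0 true true true; Pt 0 0 0 true true true; Pt 1 1 1 false false false; Pt 1 1 2 false true true; Pt 2 2 1 false false false; Pt 2 2 2 true false false]);
  (MR 0 1 0 1, MR 0 2 0 1, MR 0 1 1 0, [:: Pt 0 0 2 true true false; Pt 0 2 1 true false false; Pt 1 1 0 false true true; Pt 1 1 2 false false true; Pt 2 0 0 true true true; Pt 2 2 1 false false false]);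
  (MR 0 1 0 1, MR 0 2 0 1, MR 0 1 1 2, [:: Pt 0 0 0 true true true; Pt 0 0 2 true true false; Pt 1 1 0 false true true; Pt 1 1 2 false false true; Pt 2 2 1 false false false; Pt 2 2 1 true false false]);
  (MR 0 1 0 1, MR 0 2 0 1, MR 0 1 2 0, [:: Pt 0 0 2 true true false; Pt 0 2 1 true false false; Pt 1 1 0 false true true; Pt 1 1 1 false false false; Pt 2 0 0 true true true; Pt 2 2 2 false false true]);
  (MR 0 1 0 1, MR 0 2 0 1, MR 0 1 2 1, [:: Pt 0 0 0 true true true; Pt 0 0 2 true true false; Pt 1 1 1 false false false; Pt 1 2 1 false false false; Pt 2 1 0 false true true; Pt 2 2 2 true false true]);
  (MR 0 1 0 1, MR 0 2 0 1, MR 0 2 0 1, [:: Pt 0 0 0 true true true; Pt 0 0 0 true true true; Pt 1 1 1 false false false; Pt 1 1 2 false true false; Pt 2 2 1 false false true; Pt 2 2 2 true false false]);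
  (MR 0 1 0 1, MR 0 2 0 1, MR 0 2 0 2, [:: Pt 0 0 0 true true true; Pt 0 0 0 true true true; Pt 1 1 1 false false false; Pt 1 2 1 false false true; Pt 2 1 2 false true false; Pt 2 2 2 true false false]);
  (MR 0 1 0 1, MR 0 2 0 1, MR 0 2 1 0, [:: Pt 0 0 2 true true false; Pt 0 2 1 true false false; Pt 1 1 0 false true true; Pt 1 1 1 false false true; Pt 2 0 0 true true true; Pt 2 2 2 false false false]);
  (MR 0 1 0 1, MR 0 2 0 1, MR 0 2 1 2, [:: Pt 0 0 0 true true true; Pt 0 0 2 true true false; Pt 1 1 0 false true true; Pt 1 1 1 false false true; Pt 2 2 1 false false false; Pt 2 2 2 true false false]);
  (MR 0 1 0 1, MR 0 2 0 1, MR 0 2 2 0, [:: Pt 0 0 2 true true false; Pt 0 2 1 true false false; Pt 1 1 0 false true true; Pt 1 1 2 false false false; Pt 2 0 0 true true true; Pt 2 2 1 false false true]);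
  (MR 0 1 0 1, MR 0 2 0 1, MR 0 2 2 1, [:: Pt 0 0 0 true true true; Pt 0 0 2 true true false; Pt 1 1 1 false false false; Pt 1 2 2 false false false; Pt 2 1 0 false true true; Pt 2 2 1 true false true]);
  (MR 0 1 0 1, MR 0 2 0 1, MR 1 2 0 1, [:: Pt 0 0 0 true true true; Pt 0 2 1 true false true; Pt 1 1 0 false true false; Pt 1 1 2 false false false; Pt 2 0 2 true true false; Pt 2 2 1 false false true]);
  (MR 0 1 0 1, MR 0 2 0 1, MR 1 2 0 2, [:: Pt 0 0 0 true true true; Pt 0 2 1 true false true; Pt 1 1 0 false true false; Pt 1 1 1 false false true; Pt 2 0 2 true true false; Pt 2 2 2 false false false]);
  (MR 0 1 0 1, MR 0 2 0 1, MR 1 2 1 0, [:: Pt 0 0 0 true true false; Pt 0 0 2 true true false; Pt 1 1 0 false true true; Pt 1 1 1 false false true; Pt 2 2 1 false false true; Pt 2 2 2 true false false]);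
  (MR 0 1 0 1, MR 0 2 0 1, MR 1 2 1 2, [:: Pt 0 0 0 true true false; Pt 0 0 0 true true true; Pt 1 1 1 false false true; Pt 1 2 1 false false true; Pt 2 1 2 false true false; Pt 2 2 2 true false false]);
  (MR 0 1 0 1, MR 0 2 0 1, MR 1 2 2 0, [:: Pt 0 0 0 true true false; Pt 0 0 2 true true false; Pt 1 1 0 false true true; Pt 1 1 2 false false false; Pt 2 2 1 false false true; Pt 2 2 1 true false true]);
  (MR 0 1 0 1, MR 0 2 0 1, MR 1 2 2 1, [:: Pt 0 0 0 true true false; Pt 0 0 0 true true true; Pt 1 1 2 false false false; Pt 1 1 2 false true false; Pt 2 2 1 false false true; Pt 2 2 1 true false true]);
  (MR 0 1 0 1, MR 1 2 0 1, MD [:: 0; 1; 2], [:: Pt 0 0 1 true false false; Pt 0 0 2 true true false; Pt 1 1 0 false true false; Pt 1 2 2 false false true; Pt 2 1 0 false true true; Pt 2 2 1 true false true]);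
  (MR 0 1 0 1, MR 1 2 0 1, MD [:: 0; 2; 1], [:: Pt 0 0 1 true false false; Pt 0 0 2 true true false; Pt 1 1 0 false true false; Pt 1 2 1 false false true; Pt 2 1 0 false true true; Pt 2 2 2 true false true]);
  (MR 0 1 0 1, MR 1 2 0 1, MD [:: 1; 0; 2], [:: Pt 0 0 0 true true false; Pt 0 0 2 true false false; Pt 1 1 2 false true false; Pt 1 2 1 false false true; Pt 2 1 0 false true true; Pt 2 2 1 true false true]);
  (MR 0 1 0 1, MR 1 2 0 1, MD [:: 1; 2; 0], [:: Pt 0 0 0 true true false; Pt 0 0 1 true false false; Pt 1 1 2 false true false; Pt 1 2 1 false false true; Pt 2 1 0 false true true; Pt 2 2 2 true false true]);
  (MR 0 1 0 1, MR 1 2 0 1, MD [:: 2; 0; 1], [:: Pt 0 0 0 true true false; Pt 0 0 2 true false false; Pt 1 1 0 false true false; Pt 1 2 1 false false true; Pt 2 1 2 false true true; Pt 2 2 1 true false true]);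
  (MR 0 1 0 1, MR 1 2 0 1, MD [:: 2; 1; 0], [:: Pt 0 0 0 true true false; Pt 0 0 1 true false false; Pt 1 1 0 false true false; Pt 1 1 2 false true true; Pt 2 2 1 false false true; Pt 2 2 2 true false true]);
  (MR 0 1 0 1, MR 1 2 0 1, MR 0 1 0 1, [:: Pt 0 0 0 true true true; Pt 0 0 2 true false true; Pt 1 1 2 false true false; Pt 1 2 1 false false false; Pt 2 1 0 false true true; Pt 2 2 1 true false false]);
  (MR 0 1 0 1, MR 1 2 0 1, MR 0 1 0 2, [:: Pt 0 0 0 true true true; Pt 0 0 2 true false true; Pt 1 1 0 false true true; Pt 1 1 2 false true false; Pt 2 2 1 false false false; Pt 2 2 1 true false false]);
  (MR 0 1 0 1, MR 1 2 0 1, MR 0 1 1 0, [:: Pt 0 0 1 true false false; Pt 0 0 2 true true false; Pt 1 1 0 false true true; Pt 1 1 0 false true true; Pt 2 2 1 false false false; Pt 2 2 2 true false true]);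
  (MR 0 1 0 1, MR 1 2 0 1, MR 0 1 1 2, [:: Pt 0 0 0 true true true; Pt 0 0 1 true false false; Pt 1 1 0 false true true; Pt 1 1 2 false true true; Pt 2 2 1 false false false; Pt 2 2 2 true false false]);
  (MR 0 1 0 1, MR 1 2 0 1, MR 0 1 2 0, [:: Pt 0 0 1 true false false; Pt 0 0 2 true true false; Pt 1 1 0 false true true; Pt 1 2 1 false false false; Pt 2 1 0 false true true; Pt 2 2 2 true false true]);
  (MR 0 1 0 1, MR 1 2 0 1, MR 0 1 2 1, [:: Pt 0 0 0 true true true; Pt 0 0 1 true false false; Pt 1 1 2 false true false; Pt 1 2 1 false false false; Pt 2 1 0 false true true; Pt 2 2 2 true false true]);
  (MR 0 1 0 1, MR 1 2 0 1, MR 0 2 0 1, [:: Pt 0 0 0 true true true; Pt 0 0 1 true false true; Pt 1 1 2 false true false; Pt 1 2 1 false false false; Pt 2 1 0 false true true; Pt 2 2 2 true false false]);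
  (MR 0 1 0 1, MR 1 2 0 1, MR 0 2 0 2, [:: Pt 0 0 0 true true true; Pt 0 0 1 true false true; Pt 1 1 0 false true true; Pt 1 1 2 false true false; Pt 2 2 1 false false false; Pt 2 2 2 true false false]);
  (MR 0 1 0 1, MR 1 2 0 1, MR 0 2 1 0, [:: Pt 0 0 1 true false false; Pt 0 0 2 true true false; Pt 1 1 0 false true true; Pt 1 1 0 false true true; Pt 2 2 1 false false true; Pt 2 2 2 true false false]);
  (MR 0 1 0 1, MR 1 2 0 1, MR 0 2 1 2, [:: Pt 0 0 0 true true true; Pt 0 0 1 true false false; Pt 1 1 0 false true true; Pt 1 2 1 false false true; Pt 2 1 2 false true false; Pt 2 2 2 true false false]);
  (MR 0 1 0 1, MR 1 2 0 1, MR 0 2 2 0, [:: Pt 0 0 1 true false false; Pt 0 0 2 true true false; Pt 1 1 0 false true true; Pt 1 2 2 false false false; Pt 2 1 0 false true true; Pt 2 2 1 true false true]);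
  (MR 0 1 0 1, MR 1 2 0 1, MR 0 2 2 1, [:: Pt 0 0 0 true true true; Pt 0 0 1 true false false; Pt 1 1 2 false true false; Pt 1 2 2 false false false; Pt 2 1 0 false true true; Pt 2 2 1 true false true]);
  (MR 0 1 0 1, MR 1 2 0 1, MR 1 2 0 1, [:: Pt 0 0 0 true true true; Pt 0 0 1 true false true; Pt 1 1 0 false true false; Pt 1 1 2 false true false; Pt 2 2 1 false false true; Pt 2 2 2 true false false]);
  (MR 0 1 0 1, MR 1 2 0 1, MR 1 2 0 2, [:: Pt 0 0 0 true true true; Pt 0 0 1 true false true; Pt 1 1 0 false true false; Pt 1 2 1 false false true; Pt 2 1 2 false true false; Pt 2 2 2 true false false]);
  (MR 0 1 0 1, MR 1 2 0 1, MR 1 2 1 0, [:: Pt 0 0 0 true true false; Pt 0 0 2 true false false; Pt 1 1 0 false true true; Pt 1 2 1 false false true; Pt 2 1 2 false true false; Pt 2 2 1 true false true]);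
  (MR 0 1 0 1, MR 1 2 0 1, MR 1 2 1 2, [:: Pt 0 0 0 true true false; Pt 0 0 1 true false true; Pt 1 1 0 false true true; Pt 1 2 1 false false true; Pt 2 1 2 false true false; Pt 2 2 2 true false false]);
  (MR 0 1 0 1, MR 1 2 0 1, MR 1 2 2 0, [:: Pt 0 0 0 true true false; Pt 0 0 2 true false false; Pt 1 1 0 false true true; Pt 1 1 2 false true false; Pt 2 2 1 false false true; Pt 2 2 1 true false true]);
  (MR 0 1 0 1, MR 1 2 0 1, MR 1 2 2 1, [:: Pt 0 0 0 true true false; Pt 0 0 1 true false true; Pt 1 1 2 false true false; Pt 1 2 2 false false false; Pt 2 1 0 false true true; Pt 2 2 1 true false true]);
  (MR 0 2 0 1, MD [:: 0; 1; 2], MD [:: 0; 1; 2], [:: Pt 0 0 1 true false false; Pt 0 0 2 true false false; Pt 1 1 2 false false false; Pt 1 2 0 true true true; Pt 2 1 0 false true true; Pt 2 2 1 false true true]);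
  (MR 0 2 0 1, MD [:: 0; 1; 2], MD [:: 0; 2; 1], [:: Pt 0 0 1 true false false; Pt 0 0 1 true false false; Pt 1 2 0 false false false; Pt 1 2 0 true true true; Pt 2 1 2 false true true; Pt 2 1 2 false true true]);
  (MR 0 2 0 1, MD [:: 0; 1; 2], MD [:: 1; 0; 2], [:: Pt 0 0 2 true false false; Pt 0 0 2 true false false; Pt 1 2 1 false false false; Pt 1 2 1 true true true; Pt 2 1 0 false true true; Pt 2 1 0 false true true]);
  (MR 0 2 0 1, MD [:: 0; 1; 2], MD [:: 1; 2; 0], [:: Pt 0 0 1 true false false; Pt 0 2 0 true false false; Pt 1 0 1 true false false; Pt 1 1 2 false true true; Pt 2 1 2 false true true; Pt 2 2 0 false true true]);
  (MR 0 2 0 1, MD [:: 0; 1; 2], MD [:: 2; 0; 1], [:: Pt 0 0 2 true false false; Pt 0 2 0 true false false; Pt 1 0 1 true false false; Pt 1 1 0 false true true; Pt 2 1 2 false true true; Pt 2 2 1 false true true]);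
  (MR 0 2 0 1, MD [:: 0; 1; 2], MD [:: 2; 1; 0], [:: Pt 0 0 1 true false false; Pt 0 0 1 true false false; Pt 1 2 0 false false false; Pt 1 2 0 true true true; Pt 2 1 2 false true true; Pt 2 1 2 false true true]);
  (MR 0 2 0 1, MD [:: 0; 1; 2], MR 0 1 0 1, [:: Pt 0 0 2 true false true; Pt 0 2 0 true false true; Pt 1 0 1 true false false; Pt 1 1 2 false true false; Pt 2 1 0 false true true; Pt 2 2 1 false true false]);
  (MR 0 2 0 1, MD [:: 0; 1; 2], MR 0 1 0 2, [:: Pt 0 0 2 true false true; Pt 0 2 0 true false true; Pt 1 0 1 true false false; Pt 1 1 0 false true true; Pt 2 1 2 false true false; Pt 2 2 1 false true false]);
  (MR 0 2 0 1, MD [:: 0; 1; 2], MR 0 1 1 0, [:: Pt 0 0 1 true false false; Pt 0 0 1 true false false; Pt 1 1 2 false false true; Pt 1 2 0 true true true; Pt 2 1 2 false true false; Pt 2 2 0 false true true]);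
  (MR 0 2 0 1, MD [:: 0; 1; 2], MR 0 1 1 2, [:: Pt 0 0 1 true false false; Pt 0 0 2 true false true; Pt 1 1 0 false false true; Pt 1 2 0 true true true; Pt 2 1 2 false true false; Pt 2 2 1 false true false]);
  (MR 0 2 0 1, MD [:: 0; 1; 2], MR 0 1 2 0, [:: Pt 0 0 1 true false false; Pt 0 0 1 true false false; Pt 1 1 2 false false false; Pt 1 2 0 true true true; Pt 2 1 2 false true true; Pt 2 2 0 false true true]);
  (MR 0 2 0 1, MD [:: 0; 1; 2], MR 0 1 2 1, [:: Pt 0 0 1 true false false; Pt 0 0 2 true false true; Pt 1 1 2 false false false; Pt 1 2 1 true true false; Pt 2 1 0 false true true; Pt 2 2 0 false true true]);
  (MR 0 2 0 1, MD [:: 0; 1; 2], MR 0 2 0 1, [:: Pt 0 0 1 true false true; Pt 0 2 0 true false true; Pt 1 0 1 true false false; Pt 1 1 2 false true false; Pt 2 1 2 false true false; Pt 2 2 0 false true true]);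
  (MR 0 2 0 1, MD [:: 0; 1; 2], MR 0 2 0 2, [:: Pt 0 0 1 true false true; Pt 0 2 0 true false true; Pt 1 0 1 true false false; Pt 1 2 0 false true true; Pt 2 1 2 false true false; Pt 2 1 2 false true false]);
  (MR 0 2 0 1, MD [:: 0; 1; 2], MR 0 2 1 0, [:: Pt 0 0 1 true false false; Pt 0 0 2 true false false; Pt 1 1 0 false false true; Pt 1 2 0 true true true; Pt 2 1 2 false true false; Pt 2 2 1 false true true]);
  (MR 0 2 0 1, MD [:: 0; 1; 2], MR 0 2 1 2, [:: Pt 0 0 1 true false false; Pt 0 0 1 true false true; Pt 1 2 0 false false true; Pt 1 2 0 true true true; Pt 2 1 2 false true false; Pt 2 1 2 false true false]);
  (MR 0 2 0 1, MD [:: 0; 1; 2], MR 0 2 2 0, [:: Pt 0 0 1 true false false; Pt 0 0 2 true false false; Pt 1 1 2 false false false; Pt 1 2 0 true true true; Pt 2 1 0 false true true; Pt 2 2 1 false true true]);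
  (MR 0 2 0 1, MD [:: 0; 1; 2], MR 0 2 2 1, [:: Pt 0 0 1 true false false; Pt 0 2 0 true false true; Pt 1 0 2 true false false; Pt 1 1 2 false true false; Pt 2 1 0 false true true; Pt 2 2 1 false true true]);
  (MR 0 2 0 1, MD [:: 0; 1; 2], MR 1 2 0 1, [:: Pt 0 0 1 true false true; Pt 0 0 1 true false true; Pt 1 1 2 false false false; Pt 1 2 0 true true false; Pt 2 1 2 false true false; Pt 2 2 0 false true true]);
  (MR 0 2 0 1, MD [:: 0; 1; 2], MR 1 2 0 2, [:: Pt 0 0 1 true false true; Pt 0 0 1 true false true; Pt 1 1 2 false false false; Pt 1 2 0 true true true; Pt 2 1 2 false true false; Pt 2 2 0 false true false]);
  (MR 0 2 0 1, MD [:: 0; 1; 2], MR 1 2 1 0, [:: Pt 0 0 2 true false false; Pt 0 0 2 true false false; Pt 1 1 0 false false true; Pt 1 2 1 true true true; Pt 2 1 0 false true false; Pt 2 2 1 false true true]);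
  (MR 0 2 0 1, MD [:: 0; 1; 2], MR 1 2 1 2, [:: Pt 0 0 1 true false true; Pt 0 0 2 true false false; Pt 1 1 0 false false true; Pt 1 2 1 true true true; Pt 2 1 2 false true false; Pt 2 2 0 false true false]);
  (MR 0 2 0 1, MD [:: 0; 1; 2], MR 1 2 2 0, [:: Pt 0 0 2 true false false; Pt 0 0 2 true false false; Pt 1 1 0 false false false; Pt 1 2 1 true true true; Pt 2 1 0 false true true; Pt 2 2 1 false true true]);
  (MR 0 2 0 1, MD [:: 0; 1; 2], MR 1 2 2 1, [:: Pt 0 0 1 true false true; Pt 0 0 2 true false false; Pt 1 1 2 false false false; Pt 1 2 0 true true false; Pt 2 1 0 false true true; Pt 2 2 1 false true true]);
  (MR 0 2 0 1, MR 0 1 0 1, MD [:: 0; 1; 2], [:: Pt 0 0 2 true true false; Pt 0 2 1 true false false; Pt 1 0 0 true true false; Pt 1 1 2 false false true; Pt 2 1 1 false false true; Pt 2 2 0 false true true]);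
  (MR 0 2 0 1, MR 0 1 0 1, MD [:: 0; 2; 1], [:: Pt 0 0 2 true true false; Pt 0 2 1 true false false; Pt 1 0 0 true true false; Pt 1 1 1 false false true; Pt 2 1 2 false false true; Pt 2 2 0 false true true]);
  (MR 0 2 0 1, MR 0 1 0 1, MD [:: 1; 0; 2], [:: Pt 0 0 0 true true false; Pt 0 0 0 true true false; Pt 1 1 2 false false false; Pt 1 2 2 true true true; Pt 2 1 1 false false true; Pt 2 2 1 false false true]);
  (MR 0 2 0 1, MR 0 1 0 1, MD [:: 1; 2; 0], [:: Pt 0 0 0 true true false; Pt 0 0 0 true true false; Pt 1 1 1 false false false; Pt 1 2 1 true false true; Pt 2 1 2 false false true; Pt 2 2 2 false true true]);
  (MR 0 2 0 1, MR 0 1 0 1, MD [:: 2; 0; 1], [:: Pt 0 0 0 true true false; Pt 0 0 0 true true false; Pt 1 1 1 false false false; Pt 1 2 1 true false true; Pt 2 1 2 false false true; Pt 2 2 2 false true true]);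
  (MR 0 2 0 1, MR 0 1 0 1, MD [:: 2; 1; 0], [:: Pt 0 0 0 true true false; Pt 0 0 0 true true false; Pt 1 1 2 false false false; Pt 1 2 2 true true true; Pt 2 1 1 false false true; Pt 2 2 1 false false true]);
  (MR 0 2 0 1, MR 0 1 0 1, MR 0 1 0 1, [:: Pt 0 0 0 true true true; Pt 0 0 0 true true true; Pt 1 1 1 false false false; Pt 1 2 1 true false false; Pt 2 1 2 false false false; Pt 2 2 2 false true true]);
  (MR 0 2 0 1, MR 0 1 0 1, MR 0 1 0 2, [:: Pt 0 0 0 true true true; Pt 0 0 0 true true true; Pt 1 1 1 false false false; Pt 1 2 2 true false true; Pt 2 1 1 false false false; Pt 2 2 2 false true false]);
  (MR 0 2 0 1, MR 0 1 0 1, MR 0 1 1 0, [:: Pt 0 0 2 true true false; Pt 0 2 1 true false false; Pt 1 0 0 true true true; Pt 1 1 2 false false true; Pt 2 1 1 false false false; Pt 2 2 0 false true true]);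
  (MR 0 2 0 1, MR 0 1 0 1, MR 0 1 1 2, [:: Pt 0 0 0 true true true; Pt 0 0 2 true true false; Pt 1 1 2 false false true; Pt 1 2 0 true true true; Pt 2 1 1 false false false; Pt 2 2 1 false false false]);
  (MR 0 2 0 1, MR 0 1 0 1, MR 0 1 2 0, [:: Pt 0 0 2 true true false; Pt 0 2 1 true false false; Pt 1 0 0 true true true; Pt 1 1 1 false false false; Pt 2 1 2 false false true; Pt 2 2 0 false true true]);
  (MR 0 2 0 1, MR 0 1 0 1, MR 0 1 2 1, [:: Pt 0 0 0 true true true; Pt 0 0 2 true true false; Pt 1 1 1 false false false; Pt 1 2 1 true false false; Pt 2 1 2 false false true; Pt 2 2 0 false true true]);
  (MR 0 2 0 1, MR 0 1 0 1, MR 0 2 0 1, [:: Pt 0 0 0 true true true; Pt 0 0 0 true true true; Pt 1 1 1 false false false; Pt 1 2 2 true false false; Pt 2 1 1 false false true; Pt 2 2 2 false true false]);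
  (MR 0 2 0 1, MR 0 1 0 1, MR 0 2 0 2, [:: Pt 0 0 0 true true true; Pt 0 0 0 true true true; Pt 1 1 1 false false false; Pt 1 2 1 true false true; Pt 2 1 2 false false false; Pt 2 2 2 false true false]);
  (MR 0 2 0 1, MR 0 1 0 1, MR 0 2 1 0, [:: Pt 0 0 2 true true false; Pt 0 2 1 true false false; Pt 1 0 0 true true true; Pt 1 1 1 false false true; Pt 2 1 2 false false false; Pt 2 2 0 false true true]);
  (MR 0 2 0 1, MR 0 1 0 1, MR 0 2 1 2, [:: Pt 0 0 0 true true true; Pt 0 0 2 true true false; Pt 1 1 1 false false true; Pt 1 2 0 true true true; Pt 2 1 1 false false false; Pt 2 2 2 false false false]);
  (MR 0 2 0 1, MR 0 1 0 1, MR 0 2 2 0, [:: Pt 0 0 2 true true false; Pt 0 2 1 true false false; Pt 1 0 0 true true true; Pt 1 1 2 false false false; Pt 2 1 1 false false true; Pt 2 2 0 false true true]);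
  (MR 0 2 0 1, MR 0 1 0 1, MR 0 2 2 1, [:: Pt 0 0 0 true true true; Pt 0 0 2 true true false; Pt 1 1 1 false false false; Pt 1 2 2 true false false; Pt 2 1 1 false false true; Pt 2 2 0 false true true]);
  (MR 0 2 0 1, MR 0 1 0 1, MR 1 2 0 1, [:: Pt 0 0 0 true true true; Pt 0 2 1 true false true; Pt 1 0 0 true true false; Pt 1 1 2 false false false; Pt 2 1 1 false false true; Pt 2 2 2 false true false]);
  (MR 0 2 0 1, MR 0 1 0 1, MR 1 2 0 2, [:: Pt 0 0 0 true true true; Pt 0 2 1 true false true; Pt 1 0 0 true true false; Pt 1 1 1 false false true; Pt 2 1 2 false false false; Pt 2 2 2 false true false]);
  (MR 0 2 0 1, MR 0 1 0 1, MR 1 2 1 0, [:: Pt 0 0 0 true true false; Pt 0 0 2 true true false; Pt 1 1 1 false false true; Pt 1 2 0 true true true; Pt 2 1 1 false false true; Pt 2 2 2 false false false]);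
  (MR 0 2 0 1, MR 0 1 0 1, MR 1 2 1 2, [:: Pt 0 0 0 true true false; Pt 0 0 0 true true true; Pt 1 1 1 false false true; Pt 1 2 1 true false true; Pt 2 1 2 false false false; Pt 2 2 2 false true false]);
  (MR 0 2 0 1, MR 0 1 0 1, MR 1 2 2 0, [:: Pt 0 0 0 true true false; Pt 0 0 2 true true false; Pt 1 1 1 false false true; Pt 1 2 2 true false false; Pt 2 1 1 false false true; Pt 2 2 0 false true true]);
  (MR 0 2 0 1, MR 0 1 0 1, MR 1 2 2 1, [:: Pt 0 0 0 true true false; Pt 0 0 0 true true true; Pt 1 1 2 false false false; Pt 1 2 2 true true false; Pt 2 1 1 false false true; Pt 2 2 1 false false true]);
  (MR 0 2 0 1, MR 0 2 0 1, MD [:: 0; 1; 2], [:: Pt 0 0 2 true true false; Pt 0 2 1 true false false; Pt 1 0 0 true true false; Pt 1 1 2 false false true; Pt 2 1 0 false true true; Pt 2 2 1 false false true]);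
  (MR 0 2 0 1, MR 0 2 0 1, MD [:: 0; 2; 1], [:: Pt 0 0 2 true true false; Pt 0 2 1 true false false; Pt 1 0 0 true true false; Pt 1 1 1 false false true; Pt 2 1 0 false true true; Pt 2 2 2 false false true]);
  (MR 0 2 0 1, MR 0 2 0 1, MD [:: 1; 0; 2], [:: Pt 0 0 0 true true false; Pt 0 0 0 true true false; Pt 1 1 2 false true false; Pt 1 2 2 true false true; Pt 2 1 1 false false true; Pt 2 2 1 false false true]);
  (MR 0 2 0 1, MR 0 2 0 1, MD [:: 1; 2; 0], [:: Pt 0 0 0 true true false; Pt 0 0 0 true true false; Pt 1 1 1 false false false; Pt 1 2 1 true false true; Pt 2 1 2 false true true; Pt 2 2 2 false false true]);
  (MR 0 2 0 1, MR 0 2 0 1, MD [:: 2; 0; 1], [:: Pt 0 0 0 true true false; Pt 0 0 0 true true false; Pt 1 1 1 false false false; Pt 1 2 1 true false true; Pt 2 1 2 false true true; Pt 2 2 2 false false true]);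
  (MR 0 2 0 1, MR 0 2 0 1, MD [:: 2; 1; 0], [:: Pt 0 0 0 true true false; Pt 0 0 0 true true false; Pt 1 1 2 false true false; Pt 1 2 2 true false true; Pt 2 1 1 false false true; Pt 2 2 1 false false true]);
  (MR 0 2 0 1, MR 0 2 0 1, MR 0 1 0 1, [:: Pt 0 0 0 true true true; Pt 0 0 0 true true true; Pt 1 1 1 false false false; Pt 1 2 1 true false false; Pt 2 1 2 false true false; Pt 2 2 2 false false true]);
  (MR 0 2 0 1, MR 0 2 0 1, MR 0 1 0 2, [:: Pt 0 0 0 true true true; Pt 0 0 0 true true true; Pt 1 1 1 false false false; Pt 1 2 2 true false true; Pt 2 1 2 false true false; Pt 2 2 1 false false false]);
  (MR 0 2 0 1, MR 0 2 0 1, MR 0 1 1 0, [:: Pt 0 0 2 true true false; Pt 0 2 1 true false false; Pt 1 0 0 true true true; Pt 1 1 0 false true true; Pt 2 1 1 false false false; Pt 2 2 2 false false true]);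
  (MR 0 2 0 1, MR 0 2 0 1, MR 0 1 1 2, [:: Pt 0 0 0 true true true; Pt 0 0 2 true true false; Pt 1 1 0 false true true; Pt 1 2 2 true false true; Pt 2 1 1 false false false; Pt 2 2 1 false false false]);
  (MR 0 2 0 1, MR 0 2 0 1, MR 0 1 2 0, [:: Pt 0 0 2 true true false; Pt 0 2 1 true false false; Pt 1 0 0 true true true; Pt 1 1 1 false false false; Pt 2 1 0 false true true; Pt 2 2 2 false false true]);
  (MR 0 2 0 1, MR 0 2 0 1, MR 0 1 2 1, [:: Pt 0 0 0 true true true; Pt 0 0 2 true true false; Pt 1 1 1 false false false; Pt 1 2 1 true false false; Pt 2 1 0 false true true; Pt 2 2 2 false false true]);
  (MR 0 2 0 1, MR 0 2 0 1, MR 0 2 0 1, [:: Pt 0 0 0 true true true; Pt 0 0 0 true true true; Pt 1 1 1 false false false; Pt 1 2 2 true false false; Pt 2 1 2 false true false; Pt 2 2 1 false false true]);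
  (MR 0 2 0 1, MR 0 2 0 1, MR 0 2 0 2, [:: Pt 0 0 0 true true true; Pt 0 0 0 true true true; Pt 1 1 1 false false false; Pt 1 2 1 true false true; Pt 2 1 2 false true false; Pt 2 2 2 false false false]);
  (MR 0 2 0 1, MR 0 2 0 1, MR 0 2 1 0, [:: Pt 0 0 2 true true false; Pt 0 2 1 true false false; Pt 1 0 0 true true true; Pt 1 1 0 false true true; Pt 2 1 1 false false true; Pt 2 2 2 false false false]);
  (MR 0 2 0 1, MR 0 2 0 1, MR 0 2 1 2, [:: Pt 0 0 0 true true true; Pt 0 0 2 true true false; Pt 1 1 0 false true true; Pt 1 2 1 true false true; Pt 2 1 1 false false false; Pt 2 2 2 false false false]);
  (MR 0 2 0 1, MR 0 2 0 1, MR 0 2 2 0, [:: Pt 0 0 2 true true false; Pt 0 2 1 true false false; Pt 1 0 0 true true true; Pt 1 1 2 false false false; Pt 2 1 0 false true true; Pt 2 2 1 false false true]);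
  (MR 0 2 0 1, MR 0 2 0 1, MR 0 2 2 1, [:: Pt 0 0 0 true true true; Pt 0 0 2 true true false; Pt 1 1 1 false false false; Pt 1 2 2 true false false; Pt 2 1 0 false true true; Pt 2 2 1 false false true]);
  (MR 0 2 0 1, MR 0 2 0 1, MR 1 2 0 1, [:: Pt 0 0 0 true true true; Pt 0 2 1 true false true; Pt 1 0 0 true true false; Pt 1 1 2 false false false; Pt 2 1 2 false true false; Pt 2 2 1 false false true]);
  (MR 0 2 0 1, MR 0 2 0 1, MR 1 2 0 2, [:: Pt 0 0 0 true true true; Pt 0 2 1 true false true; Pt 1 0 0 true true false; Pt 1 1 1 false false true; Pt 2 1 2 false true false; Pt 2 2 2 false false false]);
  (MR 0 2 0 1, MR 0 2 0 1, MR 1 2 1 0, [:: Pt 0 0 0 true true false; Pt 0 0 2 true true false; Pt 1 1 0 false true true; Pt 1 2 1 true false true; Pt 2 1 1 false false true; Pt 2 2 2 false false false]);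
  (MR 0 2 0 1, MR 0 2 0 1, MR 1 2 1 2, [:: Pt 0 0 0 true true false; Pt 0 0 0 true true true; Pt 1 1 1 false false true; Pt 1 2 1 true false true; Pt 2 1 2 false true false; Pt 2 2 2 false false false]);
  (MR 0 2 0 1, MR 0 2 0 1, MR 1 2 2 0, [:: Pt 0 0 0 true true false; Pt 0 0 2 true true false; Pt 1 1 0 false true true; Pt 1 2 2 true false false; Pt 2 1 1 false false true; Pt 2 2 1 false false true]);
  (MR 0 2 0 1, MR 0 2 0 1, MR 1 2 2 1, [:: Pt 0 0 0 true true false; Pt 0 0 0 true true true; Pt 1 1 2 false true false; Pt 1 2 2 true false false; Pt 2 1 1 false false true; Pt 2 2 1 false false true]);
  (MR 0 2 0 1, MR 1 2 0 1, MD [:: 0; 1; 2], [:: Pt 0 0 1 true false false; Pt 0 0 2 true true false; Pt 1 1 0 false true false; Pt 1 2 2 true false true; Pt 2 1 0 false true true; Pt 2 2 1 false false true]);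
  (MR 0 2 0 1, MR 1 2 0 1, MD [:: 0; 2; 1], [:: Pt 0 0 1 true false false; Pt 0 0 2 true true false; Pt 1 1 0 false true false; Pt 1 2 1 true false true; Pt 2 1 0 false true true; Pt 2 2 2 false false true]);
  (MR 0 2 0 1, MR 1 2 0 1, MD [:: 1; 0; 2], [:: Pt 0 0 0 true true false; Pt 0 0 2 true false false; Pt 1 1 2 false true false; Pt 1 2 1 true false true; Pt 2 1 0 false true true; Pt 2 2 1 false false true]);
  (MR 0 2 0 1, MR 1 2 0 1, MD [:: 1; 2; 0], [:: Pt 0 0 0 true true false; Pt 0 0 1 true false false; Pt 1 1 2 false true false; Pt 1 2 1 true false true; Pt 2 1 0 false true true; Pt 2 2 2 false false true]);
  (MR 0 2 0 1, MR 1 2 0 1, MD [:: 2; 0; 1], [:: Pt 0 0 0 true true false; Pt 0 0 2 true false false; Pt 1 1 0 false true false; Pt 1 2 1 true false true; Pt 2 1 2 false true true; Pt 2 2 1 false false true]);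
  (MR 0 2 0 1, MR 1 2 0 1, MD [:: 2; 1; 0], [:: Pt 0 0 0 true true false; Pt 0 0 1 true false false; Pt 1 1 0 false true false; Pt 1 2 2 true false true; Pt 2 1 2 false true true; Pt 2 2 1 false false true]);
  (MR 0 2 0 1, MR 1 2 0 1, MR 0 1 0 1, [:: Pt 0 0 0 true true true; Pt 0 0 2 true false true; Pt 1 1 2 false true false; Pt 1 2 1 true false false; Pt 2 1 0 false true true; Pt 2 2 1 false false false]);
  (MR 0 2 0 1, MR 1 2 0 1, MR 0 1 0 2, [:: Pt 0 0 0 true true true; Pt 0 0 2 true false true; Pt 1 1 0 false true true; Pt 1 2 1 true false false; Pt 2 1 2 false true false; Pt 2 2 1 false false false]);
  (MR 0 2 0 1, MR 1 2 0 1, MR 0 1 1 0, [:: Pt 0 0 1 true false false; Pt 0 0 2 true true false; Pt 1 1 0 false true true; Pt 1 2 2 true false true; Pt 2 1 0 false true true; Pt 2 2 1 false false false]);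
  (MR 0 2 0 1, MR 1 2 0 1, MR 0 1 1 2, [:: Pt 0 0 0 true true true; Pt 0 0 1 true false false; Pt 1 1 0 false true true; Pt 1 2 2 true false true; Pt 2 1 2 false true false; Pt 2 2 1 false false false]);
  (MR 0 2 0 1, MR 1 2 0 1, MR 0 1 2 0, [:: Pt 0 0 1 true false false; Pt 0 0 2 true true false; Pt 1 1 0 false true true; Pt 1 2 1 true false false; Pt 2 1 0 false true true; Pt 2 2 2 false false true]);
  (MR 0 2 0 1, MR 1 2 0 1, MR 0 1 2 1, [:: Pt 0 0 0 true true true; Pt 0 0 1 true false false; Pt 1 1 2 false true false; Pt 1 2 1 true false false; Pt 2 1 0 false true true; Pt 2 2 2 false false true]);
  (MR 0 2 0 1, MR 1 2 0 1, MR 0 2 0 1, [:: Pt 0 0 0 true true true; Pt 0 0 1 true false true; Pt 1 1 2 false true false; Pt 1 2 1 true false false; Pt 2 1 0 false true true; Pt 2 2 2 false false false]);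
  (MR 0 2 0 1, MR 1 2 0 1, MR 0 2 0 2, [:: Pt 0 0 0 true true true; Pt 0 0 1 true false true; Pt 1 1 0 false true true; Pt 1 2 1 true false false; Pt 2 1 2 false true false; Pt 2 2 2 false false false]);
  (MR 0 2 0 1, MR 1 2 0 1, MR 0 2 1 0, [:: Pt 0 0 1 true false false; Pt 0 0 2 true true false; Pt 1 1 0 false true true; Pt 1 2 1 true false true; Pt 2 1 0 false true true; Pt 2 2 2 false false false]);
  (MR 0 2 0 1, MR 1 2 0 1, MR 0 2 1 2, [:: Pt 0 0 0 true true true; Pt 0 0 1 true false false; Pt 1 1 0 false true true; Pt 1 2 1 true false true; Pt 2 1 2 false true false; Pt 2 2 2 false false false]);
  (MR 0 2 0 1, MR 1 2 0 1, MR 0 2 2 0, [:: Pt 0 0 1 true false false; Pt 0 0 2 true true false; Pt 1 1 0 false true true; Pt 1 2 2 true false false; Pt 2 1 0 false true true; Pt 2 2 1 false false true]);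
  (MR 0 2 0 1, MR 1 2 0 1, MR 0 2 2 1, [:: Pt 0 0 0 true true true; Pt 0 0 1 true false false; Pt 1 1 2 false true false; Pt 1 2 2 true false false; Pt 2 1 0 false true true; Pt 2 2 1 false false true]);
  (MR 0 2 0 1, MR 1 2 0 1, MR 1 2 0 1, [:: Pt 0 0 0 true true true; Pt 0 0 1 true false true; Pt 1 1 0 false true false; Pt 1 2 2 true false false; Pt 2 1 2 false true false; Pt 2 2 1 false false true]);
  (MR 0 2 0 1, MR 1 2 0 1, MR 1 2 0 2, [:: Pt 0 0 0 true true true; Pt 0 0 1 true false true; Pt 1 1 0 false true false; Pt 1 2 1 true false true; Pt 2 1 2 false true false; Pt 2 2 2 false false false]);
  (MR 0 2 0 1, MR 1 2 0 1, MR 1 2 1 0, [:: Pt 0 0 0 true true false; Pt 0 0 2 true false false; Pt 1 1 0 false true true; Pt 1 2 1 true false true; Pt 2 1 2 false true false; Pt 2 2 1 false false true]);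
  (MR 0 2 0 1, MR 1 2 0 1, MR 1 2 1 2, [:: Pt 0 0 0 true true false; Pt 0 0 1 true false true; Pt 1 1 0 false true true; Pt 1 2 1 true false true; Pt 2 1 2 false true false; Pt 2 2 2 false false false]);
  (MR 0 2 0 1, MR 1 2 0 1, MR 1 2 2 0, [:: Pt 0 0 0 true true false; Pt 0 0 2 true false false; Pt 1 1 2 false true false; Pt 1 2 1 true false true; Pt 2 1 0 false true true; Pt 2 2 1 false false true]);
  (MR 0 2 0 1, MR 1 2 0 1, MR 1 2 2 1, [:: Pt 0 0 0 true true false; Pt 0 0 1 true false true; Pt 1 1 2 false true false; Pt 1 2 2 true false false; Pt 2 1 0 false true true; Pt 2 2 1 false false true]);
  (MR 1 2 0 1, MD [:: 0; 1; 2], MD [:: 0; 1; 2], [:: Pt 0 0 1 true false false; Pt 0 1 2 false false false; Pt 1 0 2 true false false; Pt 1 2 0 true true true; Pt 2 1 0 false true true; Pt 2 2 1 false true true]);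
  (MR 1 2 0 1, MD [:: 0; 1; 2], MD [:: 0; 2; 1], [:: Pt 0 0 1 true false false; Pt 0 1 2 false false false; Pt 1 0 1 true false false; Pt 1 2 0 true true true; Pt 2 1 2 false true true; Pt 2 2 0 false true true]);
  (MR 1 2 0 1, MD [:: 0; 1; 2], MD [:: 1; 0; 2], [:: Pt 0 0 2 true false false; Pt 0 1 0 false false false; Pt 1 0 2 true false false; Pt 1 2 1 true true true; Pt 2 1 0 false true true; Pt 2 2 1 false true true]);
  (MR 1 2 0 1, MD [:: 0; 1; 2], MD [:: 1; 2; 0], [:: Pt 0 0 1 true false false; Pt 0 1 0 false false false; Pt 1 0 2 true false false; Pt 1 2 1 true true true; Pt 2 1 2 false true true; Pt 2 2 0 false true true]);
  (MR 1 2 0 1, MD [:: 0; 1; 2], MD [:: 2; 0; 1], [:: Pt 0 0 2 true false false; Pt 0 1 0 false false false; Pt 1 0 1 true false false; Pt 1 2 0 true true true; Pt 2 1 2 false true true; Pt 2 2 1 false true true]);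
  (MR 1 2 0 1, MD [:: 0; 1; 2], MD [:: 2; 1; 0], [:: Pt 0 0 1 true false false; Pt 0 1 0 false false false; Pt 1 0 2 true false false; Pt 1 2 0 true true true; Pt 2 1 2 false true true; Pt 2 2 1 false true true]);
  (MR 1 2 0 1, MD [:: 0; 1; 2], MR 0 1 0 1, [:: Pt 0 0 2 true false true; Pt 0 1 0 false false true; Pt 1 0 1 true false false; Pt 1 2 1 true true false; Pt 2 1 2 false true false; Pt 2 2 0 false true true]);
  (MR 1 2 0 1, MD [:: 0; 1; 2], MR 0 1 0 2, [:: Pt 0 0 2 true false true; Pt 0 1 0 false false true; Pt 1 0 1 true false false; Pt 1 2 0 true true true; Pt 2 1 2 false true false; Pt 2 2 1 false true false]);
  (MR 1 2 0 1, MD [:: 0; 1; 2], MR 0 1 1 0, [:: Pt 0 0 1 true false false; Pt 0 1 2 false false false; Pt 1 0 2 true false true; Pt 1 2 0 true true true; Pt 2 1 0 false true true; Pt 2 2 1 false true false]);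
  (MR 1 2 0 1, MD [:: 0; 1; 2], MR 0 1 1 2, [:: Pt 0 0 1 true false false; Pt 0 1 0 false false true; Pt 1 0 2 true false true; Pt 1 2 0 true true true; Pt 2 1 2 false true false; Pt 2 2 1 false true false]);
  (MR 1 2 0 1, MD [:: 0; 1; 2], MR 0 1 2 0, [:: Pt 0 0 1 true false false; Pt 0 1 2 false false false; Pt 1 0 1 true false false; Pt 1 2 0 true true true; Pt 2 1 2 false true true; Pt 2 2 0 false true true]);
  (MR 1 2 0 1, MD [:: 0; 1; 2], MR 0 1 2 1, [:: Pt 0 0 1 true false false; Pt 0 1 0 false false true; Pt 1 0 2 true false false; Pt 1 2 1 true true false; Pt 2 1 2 false true true; Pt 2 2 0 false true true]);
  (MR 1 2 0 1, MD [:: 0; 1; 2], MR 0 2 0 1, [:: Pt 0 0 1 true false true; Pt 0 1 0 false false true; Pt 1 0 2 true false false; Pt 1 2 1 true true false; Pt 2 1 2 false true false; Pt 2 2 0 false true true]);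
  (MR 1 2 0 1, MD [:: 0; 1; 2], MR 0 2 0 2, [:: Pt 0 0 1 true false true; Pt 0 1 0 false false true; Pt 1 0 2 true false false; Pt 1 2 0 true true true; Pt 2 1 2 false true false; Pt 2 2 1 false true false]);
  (MR 1 2 0 1, MD [:: 0; 1; 2], MR 0 2 1 0, [:: Pt 0 0 1 true false false; Pt 0 1 2 false false false; Pt 1 0 1 true false true; Pt 1 2 0 true true true; Pt 2 1 2 false true false; Pt 2 2 0 false true true]);
  (MR 1 2 0 1, MD [:: 0; 1; 2], MR 0 2 1 2, [:: Pt 0 0 1 true false false; Pt 0 2 0 false false true; Pt 1 0 1 true false true; Pt 1 2 0 true true true; Pt 2 1 2 false true false; Pt 2 1 2 false true false]);
  (MR 1 2 0 1, MD [:: 0; 1; 2], MR 0 2 2 0, [:: Pt 0 0 1 true false false; Pt 0 1 2 false false false; Pt 1 0 2 true false false; Pt 1 2 0 true true true; Pt 2 1 0 false true true; Pt 2 2 1 false true true]);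
  (MR 1 2 0 1, MD [:: 0; 1; 2], MR 0 2 2 1, [:: Pt 0 0 1 true false true; Pt 0 1 2 false false false; Pt 1 0 2 true false false; Pt 1 2 1 true true false; Pt 2 1 0 false true true; Pt 2 2 0 false true true]);
  (MR 1 2 0 1, MD [:: 0; 1; 2], MR 1 2 0 1, [:: Pt 0 0 1 true false true; Pt 0 1 0 false false true; Pt 1 0 2 true false false; Pt 1 2 0 true true false; Pt 2 1 2 false true false; Pt 2 2 1 false true true]);
  (MR 1 2 0 1, MD [:: 0; 1; 2], MR 1 2 0 2, [:: Pt 0 0 1 true false true; Pt 0 1 0 false false true; Pt 1 0 2 true false false; Pt 1 2 1 true true true; Pt 2 1 2 false true false; Pt 2 2 0 false true false]);
  (MR 1 2 0 1, MD [:: 0; 1; 2], MR 1 2 1 0, [:: Pt 0 0 2 true false false; Pt 0 1 0 false false false; Pt 1 0 1 true false true; Pt 1 2 0 true true true; Pt 2 1 2 false true false; Pt 2 2 1 false true true]);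
  (MR 1 2 0 1, MD [:: 0; 1; 2], MR 1 2 1 2, [:: Pt 0 0 1 true false true; Pt 0 1 2 false false false; Pt 1 0 1 true false true; Pt 1 2 0 true true true; Pt 2 1 2 false true false; Pt 2 2 0 false true false]);
  (MR 1 2 0 1, MD [:: 0; 1; 2], MR 1 2 2 0, [:: Pt 0 0 2 true false false; Pt 0 1 0 false false false; Pt 1 0 2 true false false; Pt 1 2 1 true true true; Pt 2 1 0 false true true; Pt 2 2 1 false true true]);
  (MR 1 2 0 1, MD [:: 0; 1; 2], MR 1 2 2 1, [:: Pt 0 0 1 true false true; Pt 0 1 2 false false false; Pt 1 0 2 true false false; Pt 1 2 0 true true false; Pt 2 1 0 false true true; Pt 2 2 1 false true true]);
  (MR 1 2 0 1, MR 0 1 0 1, MD [:: 0; 1; 2], [:: Pt 0 0 2 true true false; Pt 0 1 1 false false false; Pt 1 0 0 true true false; Pt 1 2 2 true false true; Pt 2 1 1 false false true; Pt 2 2 0 false true true]);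
  (MR 1 2 0 1, MR 0 1 0 1, MD [:: 0; 2; 1], [:: Pt 0 0 2 true true false; Pt 0 1 1 false false false; Pt 1 0 0 true true false; Pt 1 2 1 true false true; Pt 2 1 2 false false true; Pt 2 2 0 false true true]);
  (MR 1 2 0 1, MR 0 1 0 1, MD [:: 1; 0; 2], [:: Pt 0 0 0 true true false; Pt 0 1 2 false false false; Pt 1 0 2 true true false; Pt 1 2 1 true false true; Pt 2 1 1 false false true; Pt 2 2 0 false true true]);
  (MR 1 2 0 1, MR 0 1 0 1, MD [:: 1; 2; 0], [:: Pt 0 0 0 true true false; Pt 0 1 1 false false false; Pt 1 0 2 true true false; Pt 1 2 1 true false true; Pt 2 1 2 false false true; Pt 2 2 0 false true true]);
  (MR 1 2 0 1, MR 0 1 0 1, MD [:: 2; 0; 1], [:: Pt 0 0 0 true true false; Pt 0 1 2 false false false; Pt 1 0 0 true true false; Pt 1 2 1 true false true; Pt 2 1 1 false false true; Pt 2 2 2 false true true]);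
  (MR 1 2 0 1, MR 0 1 0 1, MD [:: 2; 1; 0], [:: Pt 0 0 0 true true false; Pt 0 1 1 false false false; Pt 1 0 0 true true false; Pt 1 2 2 true false true; Pt 2 1 1 false false true; Pt 2 2 2 false true true]);
  (MR 1 2 0 1, MR 0 1 0 1, MR 0 1 0 1, [:: Pt 0 0 0 true true true; Pt 0 1 2 false false true; Pt 1 0 2 true true false; Pt 1 2 1 true false false; Pt 2 1 1 false false false; Pt 2 2 0 false true true]);
  (MR 1 2 0 1, MR 0 1 0 1, MR 0 1 0 2, [:: Pt 0 0 0 true true true; Pt 0 1 2 false false true; Pt 1 0 0 true true true; Pt 1 2 1 true false false; Pt 2 1 1 false false false; Pt 2 2 2 false true false]);
  (MR 1 2 0 1, MR 0 1 0 1, MR 0 1 1 0, [:: Pt 0 0 2 true true false; Pt 0 1 1 false false false; Pt 1 0 0 true true true; Pt 1 2 0 true true true; Pt 2 1 1 false false false; Pt 2 2 2 false false true]);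
  (MR 1 2 0 1, MR 0 1 0 1, MR 0 1 1 2, [:: Pt 0 0 0 true true true; Pt 0 1 1 false false false; Pt 1 0 0 true true true; Pt 1 2 2 true false true; Pt 2 1 1 false false false; Pt 2 2 2 false true false]);
  (MR 1 2 0 1, MR 0 1 0 1, MR 0 1 2 0, [:: Pt 0 0 2 true true false; Pt 0 1 1 false false false; Pt 1 0 0 true true true; Pt 1 2 1 true false false; Pt 2 1 2 false false true; Pt 2 2 0 false true true]);
  (MR 1 2 0 1, MR 0 1 0 1, MR 0 1 2 1, [:: Pt 0 0 0 true true true; Pt 0 1 1 false false false; Pt 1 0 2 true true false; Pt 1 2 1 true false false; Pt 2 1 2 false false true; Pt 2 2 0 false true true]);
  (MR 1 2 0 1, MR 0 1 0 1, MR 0 2 0 1, [:: Pt 0 0 0 true true true; Pt 0 1 1 false false true; Pt 1 0 2 true true false; Pt 1 2 1 true false false; Pt 2 1 2 false false false; Pt 2 2 0 false true true]);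
  (MR 1 2 0 1, MR 0 1 0 1, MR 0 2 0 2, [:: Pt 0 0 0 true true true; Pt 0 1 1 false false true; Pt 1 0 0 true true true; Pt 1 2 1 true false false; Pt 2 1 2 false false false; Pt 2 2 2 false true false]);
  (MR 1 2 0 1, MR 0 1 0 1, MR 0 2 1 0, [:: Pt 0 0 2 true true false; Pt 0 1 1 false false false; Pt 1 0 0 true true true; Pt 1 2 0 true true true; Pt 2 1 1 false false true; Pt 2 2 2 false false false]);
  (MR 1 2 0 1, MR 0 1 0 1, MR 0 2 1 2, [:: Pt 0 0 0 true true true; Pt 0 1 1 false false false; Pt 1 0 0 true true true; Pt 1 2 1 true false true; Pt 2 1 2 false false false; Pt 2 2 2 false true false]);
  (MR 1 2 0 1, MR 0 1 0 1, MR 0 2 2 0, [:: Pt 0 0 2 true true false; Pt 0 1 1 false false false; Pt 1 0 0 true true true; Pt 1 2 2 true false false; Pt 2 1 1 false false true; Pt 2 2 0 false true true]);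
  (MR 1 2 0 1, MR 0 1 0 1, MR 0 2 2 1, [:: Pt 0 0 0 true true true; Pt 0 1 1 false false false; Pt 1 0 2 true true false; Pt 1 2 2 true false false; Pt 2 1 1 false false true; Pt 2 2 0 false true true]);
  (MR 1 2 0 1, MR 0 1 0 1, MR 1 2 0 1, [:: Pt 0 0 0 true true true; Pt 0 1 1 false false true; Pt 1 0 0 true true false; Pt 1 2 2 true false false; Pt 2 1 1 false false true; Pt 2 2 2 false true false]);
  (MR 1 2 0 1, MR 0 1 0 1, MR 1 2 0 2, [:: Pt 0 0 0 true true true; Pt 0 1 1 false false true; Pt 1 0 0 true true false; Pt 1 2 1 true false true; Pt 2 1 2 false false false; Pt 2 2 2 false true false]);
  (MR 1 2 0 1, MR 0 1 0 1, MR 1 2 1 0, [:: Pt 0 0 0 true true false; Pt 0 1 2 false false false; Pt 1 0 0 true true true; Pt 1 2 1 true false true; Pt 2 1 1 false false true; Pt 2 2 2 false true false]);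
  (MR 1 2 0 1, MR 0 1 0 1, MR 1 2 1 2, [:: Pt 0 0 0 true true false; Pt 0 1 1 false false true; Pt 1 0 0 true true true; Pt 1 2 1 true false true; Pt 2 1 2 false false false; Pt 2 2 2 false true false]);
  (MR 1 2 0 1, MR 0 1 0 1, MR 1 2 2 0, [:: Pt 0 0 0 true true false; Pt 0 1 2 false false false; Pt 1 0 0 true true true; Pt 1 2 2 true true false; Pt 2 1 1 false false true; Pt 2 2 1 false false true]);
  (MR 1 2 0 1, MR 0 1 0 1, MR 1 2 2 1, [:: Pt 0 0 0 true true false; Pt 0 1 1 false false true; Pt 1 0 2 true true false; Pt 1 2 2 true false false; Pt 2 1 1 false false true; Pt 2 2 0 false true true]);
  (MR 1 2 0 1, MR 0 2 0 1, MD [:: 0; 1; 2], [:: Pt 0 0 2 true true false; Pt 0 1 1 false false false; Pt 1 0 0 true true false; Pt 1 2 2 true false true; Pt 2 1 0 false true true; Pt 2 2 1 false false true]);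
  (MR 1 2 0 1, MR 0 2 0 1, MD [:: 0; 2; 1], [:: Pt 0 0 2 true true false; Pt 0 1 1 false false false; Pt 1 0 0 true true false; Pt 1 2 1 true false true; Pt 2 1 0 false true true; Pt 2 2 2 false false true]);
  (MR 1 2 0 1, MR 0 2 0 1, MD [:: 1; 0; 2], [:: Pt 0 0 0 true true false; Pt 0 1 0 false true false; Pt 1 0 2 true true false; Pt 1 2 2 true false true; Pt 2 1 1 false false true; Pt 2 2 1 false false true]);
  (MR 1 2 0 1, MR 0 2 0 1, MD [:: 1; 2; 0], [:: Pt 0 0 0 true true false; Pt 0 1 1 false false false; Pt 1 0 2 true true false; Pt 1 2 1 true false true; Pt 2 1 0 false true true; Pt 2 2 2 false false true]);
  (MR 1 2 0 1, MR 0 2 0 1, MD [:: 2; 0; 1], [:: Pt 0 0 0 true true false; Pt 0 1 2 false false false; Pt 1 0 0 true true false; Pt 1 2 1 true false true; Pt 2 1 2 false true true; Pt 2 2 1 false false true]);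
  (MR 1 2 0 1, MR 0 2 0 1, MD [:: 2; 1; 0], [:: Pt 0 0 0 true true false; Pt 0 1 0 false true false; Pt 1 0 2 true true false; Pt 1 2 2 true false true; Pt 2 1 1 false false true; Pt 2 2 1 false false true]);
  (MR 1 2 0 1, MR 0 2 0 1, MR 0 1 0 1, [:: Pt 0 0 0 true true true; Pt 0 1 0 false true true; Pt 1 0 2 true true false; Pt 1 2 1 true false false; Pt 2 1 1 false false false; Pt 2 2 2 false false true]);
  (MR 1 2 0 1, MR 0 2 0 1, MR 0 1 0 2, [:: Pt 0 0 0 true true true; Pt 0 1 0 false true true; Pt 1 0 2 true true false; Pt 1 2 2 true false true; Pt 2 1 1 false false false; Pt 2 2 1 false false false]);
  (MR 1 2 0 1, MR 0 2 0 1, MR 0 1 1 0, [:: Pt 0 0 2 true true false; Pt 0 1 1 false false false; Pt 1 0 0 true true true; Pt 1 2 2 true false true; Pt 2 1 0 false true true; Pt 2 2 1 false false false]);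
  (MR 1 2 0 1, MR 0 2 0 1, MR 0 1 1 2, [:: Pt 0 0 0 true true true; Pt 0 1 1 false false false; Pt 1 0 0 true true true; Pt 1 2 2 true false true; Pt 2 1 2 false true false; Pt 2 2 1 false false false]);
  (MR 1 2 0 1, MR 0 2 0 1, MR 0 1 2 0, [:: Pt 0 0 2 true true false; Pt 0 1 1 false false false; Pt 1 0 0 true true true; Pt 1 2 1 true false false; Pt 2 1 0 false true true; Pt 2 2 2 false false true]);
  (MR 1 2 0 1, MR 0 2 0 1, MR 0 1 2 1, [:: Pt 0 0 0 true true true; Pt 0 1 1 false false false; Pt 1 0 2 true true false; Pt 1 2 1 true false false; Pt 2 1 0 false true true; Pt 2 2 2 false false true]);
  (MR 1 2 0 1, MR 0 2 0 1, MR 0 2 0 1, [:: Pt 0 0 0 true true true; Pt 0 1 0 false true true; Pt 1 0 2 true true false; Pt 1 2 1 true false false; Pt 2 1 1 false false true; Pt 2 2 2 false false false]);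
  (MR 1 2 0 1, MR 0 2 0 1, MR 0 2 0 2, [:: Pt 0 0 0 true true true; Pt 0 1 0 false true true; Pt 1 0 2 true true false; Pt 1 2 1 true false true; Pt 2 1 1 false false false; Pt 2 2 2 false false false]);
  (MR 1 2 0 1, MR 0 2 0 1, MR 0 2 1 0, [:: Pt 0 0 2 true true false; Pt 0 1 1 false false false; Pt 1 0 0 true true true; Pt 1 2 1 true false true; Pt 2 1 0 false true true; Pt 2 2 2 false false false]);
  (MR 1 2 0 1, MR 0 2 0 1, MR 0 2 1 2, [:: Pt 0 0 0 true true true; Pt 0 1 1 false false false; Pt 1 0 0 true true true; Pt 1 2 1 true false true; Pt 2 1 2 false true false; Pt 2 2 2 false false false]);
  (MR 1 2 0 1, MR 0 2 0 1, MR 0 2 2 0, [:: Pt 0 0 2 true true false; Pt 0 1 1 false false false; Pt 1 0 0 true true true; Pt 1 2 2 true false false; Pt 2 1 0 false true true; Pt 2 2 1 false false true]);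
  (MR 1 2 0 1, MR 0 2 0 1, MR 0 2 2 1, [:: Pt 0 0 0 true true true; Pt 0 1 1 false false false; Pt 1 0 2 true true false; Pt 1 2 2 true false false; Pt 2 1 0 false true true; Pt 2 2 1 false false true]);
  (MR 1 2 0 1, MR 0 2 0 1, MR 1 2 0 1, [:: Pt 0 0 0 true true true; Pt 0 1 1 false false true; Pt 1 0 0 true true false; Pt 1 2 2 true false false; Pt 2 1 2 false true false; Pt 2 2 1 false false true]);
  (MR 1 2 0 1, MR 0 2 0 1, MR 1 2 0 2, [:: Pt 0 0 0 true true true; Pt 0 1 1 false false true; Pt 1 0 0 true true false; Pt 1 2 1 true false true; Pt 2 1 2 false true false; Pt 2 2 2 false false false]);
  (MR 1 2 0 1, MR 0 2 0 1, MR 1 2 1 0, [:: Pt 0 0 0 true true false; Pt 0 1 2 false false false; Pt 1 0 0 true true true; Pt 1 2 1 true false true; Pt 2 1 2 false true false; Pt 2 2 1 false false true]);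
  (MR 1 2 0 1, MR 0 2 0 1, MR 1 2 1 2, [:: Pt 0 0 0 true true false; Pt 0 1 1 false false true; Pt 1 0 0 true true true; Pt 1 2 1 true false true; Pt 2 1 2 false true false; Pt 2 2 2 false false false]);
  (MR 1 2 0 1, MR 0 2 0 1, MR 1 2 2 0, [:: Pt 0 0 0 true true false; Pt 0 1 2 false false false; Pt 1 0 2 true true false; Pt 1 2 1 true false true; Pt 2 1 0 false true true; Pt 2 2 1 false false true]);
  (MR 1 2 0 1, MR 0 2 0 1, MR 1 2 2 1, [:: Pt 0 0 0 true true false; Pt 0 1 0 false true true; Pt 1 0 2 true true false; Pt 1 2 2 true false false; Pt 2 1 1 false false true; Pt 2 2 1 false false true]);
  (MR 1 2 0 1, MR 1 2 0 1, MD [:: 0; 1; 2], [:: Pt 0 0 1 true false false; Pt 0 1 2 false true false; Pt 1 0 0 true true false; Pt 1 2 2 true false true; Pt 2 1 0 false true true; Pt 2 2 1 false false true]);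
  (MR 1 2 0 1, MR 1 2 0 1, MD [:: 0; 2; 1], [:: Pt 0 0 1 true false false; Pt 0 1 2 false true false; Pt 1 0 0 true true false; Pt 1 2 1 true false true; Pt 2 1 0 false true true; Pt 2 2 2 false false true]);
  (MR 1 2 0 1, MR 1 2 0 1, MD [:: 1; 0; 2], [:: Pt 0 0 0 true true false; Pt 0 1 2 false true false; Pt 1 0 1 true false false; Pt 1 2 2 true false true; Pt 2 1 0 false true true; Pt 2 2 1 false false true]);
  (MR 1 2 0 1, MR 1 2 0 1, MD [:: 1; 2; 0], [:: Pt 0 0 0 true true false; Pt 0 1 0 false true false; Pt 1 0 1 true false false; Pt 1 2 1 true false true; Pt 2 1 2 false true true; Pt 2 2 2 false false true]);
  (MR 1 2 0 1, MR 1 2 0 1, MD [:: 2; 0; 1], [:: Pt 0 0 0 true true false; Pt 0 1 0 false true false; Pt 1 0 1 true false false; Pt 1 2 1 true false true; Pt 2 1 2 false true true; Pt 2 2 2 false false true]);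
  (MR 1 2 0 1, MR 1 2 0 1, MD [:: 2; 1; 0], [:: Pt 0 0 1 true false false; Pt 0 1 0 false true false; Pt 1 0 0 true true false; Pt 1 2 2 true false true; Pt 2 1 2 false true true; Pt 2 2 1 false false true]);
  (MR 1 2 0 1, MR 1 2 0 1, MR 0 1 0 1, [:: Pt 0 0 0 true true true; Pt 0 1 0 false true true; Pt 1 0 1 true false false; Pt 1 2 1 true false false; Pt 2 1 2 false true false; Pt 2 2 2 false false true]);
  (MR 1 2 0 1, MR 1 2 0 1, MR 0 1 0 2, [:: Pt 0 0 0 true true true; Pt 0 1 0 false true true; Pt 1 0 1 true false false; Pt 1 2 2 true false true; Pt 2 1 2 false true false; Pt 2 2 1 false false false]);
  (MR 1 2 0 1, MR 1 2 0 1, MR 0 1 1 0, [:: Pt 0 0 1 true false false; Pt 0 1 2 false true false; Pt 1 0 0 true true true; Pt 1 2 2 true false true; Pt 2 1 0 false true true; Pt 2 2 1 false false false]);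
  (MR 1 2 0 1, MR 1 2 0 1, MR 0 1 1 2, [:: Pt 0 0 1 true false false; Pt 0 1 0 false true true; Pt 1 0 0 true true true; Pt 1 2 2 true false true; Pt 2 1 2 false true false; Pt 2 2 1 false false false]);
  (MR 1 2 0 1, MR 1 2 0 1, MR 0 1 2 0, [:: Pt 0 0 1 true false false; Pt 0 1 2 false true false; Pt 1 0 0 true true true; Pt 1 2 1 true false false; Pt 2 1 0 false true true; Pt 2 2 2 false false true]);
  (MR 1 2 0 1, MR 1 2 0 1, MR 0 1 2 1, [:: Pt 0 0 0 true true true; Pt 0 1 2 false true false; Pt 1 0 1 true false false; Pt 1 2 1 true false false; Pt 2 1 0 false true true; Pt 2 2 2 false false true]);
  (MR 1 2 0 1, MR 1 2 0 1, MR 0 2 0 1, [:: Pt 0 0 0 true true true; Pt 0 1 0 false true true; Pt 1 0 1 true false false; Pt 1 2 2 true false false; Pt 2 1 2 false true false; Pt 2 2 1 false false true]);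
  (MR 1 2 0 1, MR 1 2 0 1, MR 0 2 0 2, [:: Pt 0 0 0 true true true; Pt 0 1 0 false true true; Pt 1 0 1 true false false; Pt 1 2 1 true false true; Pt 2 1 2 false true false; Pt 2 2 2 false false false]);
  (MR 1 2 0 1, MR 1 2 0 1, MR 0 2 1 0, [:: Pt 0 0 1 true false false; Pt 0 1 2 false true false; Pt 1 0 0 true true true; Pt 1 2 1 true false true; Pt 2 1 0 false true true; Pt 2 2 2 false false false]);
  (MR 1 2 0 1, MR 1 2 0 1, MR 0 2 1 2, [:: Pt 0 0 1 true false false; Pt 0 1 0 false true true; Pt 1 0 0 true true true; Pt 1 2 1 true false true; Pt 2 1 2 false true false; Pt 2 2 2 false false false]);
  (MR 1 2 0 1, MR 1 2 0 1, MR 0 2 2 0, [:: Pt 0 0 1 true false false; Pt 0 1 2 false true false; Pt 1 0 0 true true true; Pt 1 2 2 true false false; Pt 2 1 0 false true true; Pt 2 2 1 false false true]);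
  (MR 1 2 0 1, MR 1 2 0 1, MR 0 2 2 1, [:: Pt 0 0 0 true true true; Pt 0 1 2 false true false; Pt 1 0 1 true false false; Pt 1 2 2 true false false; Pt 2 1 0 false true true; Pt 2 2 1 false false true]);
  (MR 1 2 0 1, MR 1 2 0 1, MR 1 2 0 1, [:: Pt 0 0 1 true false true; Pt 0 1 0 false true true; Pt 1 0 0 true true false; Pt 1 2 2 true false false; Pt 2 1 2 false true false; Pt 2 2 1 false false true]);
  (MR 1 2 0 1, MR 1 2 0 1, MR 1 2 0 2, [:: Pt 0 0 0 true true true; Pt 0 2 1 false false true; Pt 1 0 1 true false true; Pt 1 2 2 true false false; Pt 2 1 0 false true false; Pt 2 1 2 false true false]);
  (MR 1 2 0 1, MR 1 2 0 1, MR 1 2 1 0, [:: Pt 0 0 0 true true false; Pt 0 1 2 false true false; Pt 1 0 1 true false true; Pt 1 2 1 true false true; Pt 2 1 0 false true true; Pt 2 2 2 false false false]);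
  (MR 1 2 0 1, MR 1 2 0 1, MR 1 2 1 2, [:: Pt 0 0 0 true true false; Pt 0 1 0 false true true; Pt 1 0 1 true false true; Pt 1 2 1 true false true; Pt 2 1 2 false true false; Pt 2 2 2 false false false]);
  (MR 1 2 0 1, MR 1 2 0 1, MR 1 2 2 0, [:: Pt 0 0 0 true true false; Pt 0 1 2 false true false; Pt 1 0 1 true false true; Pt 1 2 2 true false false; Pt 2 1 0 false true true; Pt 2 2 1 false false true]);
  (MR 1 2 0 1, MR 1 2 0 1, MR 1 2 2 1, [:: Pt 0 0 1 true false true; Pt 0 1 0 false true false; Pt 1 0 2 true true false; Pt 1 2 2 true false false; Pt 2 1 0 false true true; Pt 2 2 1 false false true])].
Definition mvalid (k : mseg) (x : nat) (s : bool) (y : nat) : bool :=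
  match k with
  | MD p => y != nth 0 p x
  | MR a0 a1 b0 b1 => (x != (if s then a1 else a0)) && (y != (if s then b1 else b0))
  end.

Definition perms3 : seq (seq nat) :=
  [:: [:: 0; 1; 2]; [:: 0; 2; 1]; [:: 1; 0; 2]; [:: 1; 2; 0]; [:: 2; 0; 1]; [:: 2; 1; 0]].
Definition injs3 : seq (nat * nat) :=
  [:: (0,1); (0,2); (1,0); (1,2); (2,0); (2,1)].
Definition allseg : seq mseg :=
  map MD perms3 ++ [seq MR ab.1 ab.2 cd.1 cd.2 | ab <- injs3, cd <- injs3].

Definition pinv (p : seq nat) : seq nat := [:: index 0 p; index 1 p; index 2 p].
Definition pcomp (f g : seq nat) : seq nat := [seq nth 0 f (nth 0 g i) | i <- [:: 0; 1; 2]].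
Definition mkperm (u v : nat) : seq nat :=
  [seq (if i == u then 0 else if i == v then 1 else 2) | i <- [:: 0; 1; 2]].
Definition id3 : seq nat := [:: 0; 1; 2].

Definition actseg (k : mseg) (sX sY : seq nat) (t : bool) : mseg :=
  match k with
  | MD p => MD (pcomp sY (pcomp p (pinv sX)))
  | MR a0 a1 b0 b1 =>
      let al s := if s then a1 else a0 in
      let be s := if s then b1 else b0 in
      MR (nth 0 sX (al t)) (nth 0 sX (al (~~ t))) (nth 0 sY (be t)) (nth 0 sY (be (~~ t)))
  end.

Definition nstep (k : mseg) (sX : seq nat) : seq nat * bool :=
  match k with
  | MD p => (pcomp sX (pinv p), false)
  | MR a0 a1 b0 b1 =>
      let t := nth 0 sX a1 < nth 0 sX a0 in
      let be s := if s then b1 else b0 in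
      (mkperm (be t) (be (~~ t)), t)
  end.

Definition t3of (k : mseg) (sC : seq nat) : bool :=
  match k with MD _ => false | MR a0 a1 _ _ => nth 0 sC a1 < nth 0 sC a0 end.

Definition lookup (c1 c2 c3 : mseg) : seq pt :=
  let fix go (l : seq (mseg * mseg * mseg * seq pt)) :=
    match l with
    | [::] => [::]
    | (k1, k2, k3, W) :: l' =>
        if [&& mseg_eqb k1 c1, mseg_eqb k2 c2 & mseg_eqb k3 c3] then W else go l'
    end in go table.

Definition wit (c1 c2 c3 : mseg) : seq pt :=
  let sA := id3 in
  let (sB, t1) := nstep c1 sA in
  let (sC, t2) := nstep c2 sB in
  let t3 := t3of c3 sC in
  let W := lookup (actseg c1 sA sB t1) (actseg c2 sB sC t2) (actseg c3 sC sA t3) in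
  [seq Pt (nth 0 (pinv sA) (pa p)) (nth 0 (pinv sB) (pb p)) (nth 0 (pinv sC) (pc p))
          (ps1 p (+) t1) (ps2 p (+) t2) (ps3 p (+) t3) | p <- W].

Definition checkW (c1 c2 c3 : mseg) (W : seq pt) : bool :=
  [&& size W == 6,
      all (fun p => [&& mvalid c1 (pa p) (ps1 p) (pb p), mvalid c2 (pb p) (ps2 p) (pc p)
                      & mvalid c3 (pc p) (ps3 p) (pa p)]) W,
      all (fun i => [&& count (fun p => pa p == i) W == 2,
                        count (fun p => pb p == i) W == 2 &
                        count (fun p => pc p == i) W == 2]) [:: 0; 1; 2] &
      [&& count ps1 W == 3, count ps2 W == 3 & count ps3 W == 3]].

Definition allcheck : bool :=
  all (fun c1 => all (fun c2 => all (fun c3 => checkW c1 c2 c3 (wit c1 c2 c3)) allseg) allseg) allseg.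


Definition checkW' (c1 c2 c3 : mseg) (W : seq pt) : bool :=
  checkW c1 c2 c3 W && all (fun p => [&& pa p < 3, pb p < 3 & pc p < 3]) W.

Definition allcheck' : bool :=
  all (fun c1 => all (fun c2 => all (fun c3 => checkW' c1 c2 c3 (wit c1 c2 c3)) allseg) allseg) allseg.

Lemma allcheck'_ok : allcheck'.
Proof. vm_compute. reflexivity. Qed.

Fixpoint bits (m : nat) : seq (seq bool) :=
  if m is m'.+1 then [seq b :: l | b <- [:: true; false], l <- bits m'] else [:: [::]].

Definition i3 := iota 0 3.
Definition bb := [:: false; true].

Definition matchMl (l : seq bool) : bool :=
  all (fun x => all (fun y => all (fun y' =>
    (nth false l (x*3+y) && nth false l (x*3+y')) ==> (y == y')) i3) i3) i3 &&
  all (fun x => all (fun x' => all (fun y =>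
    (nth false l (x*3+y) && nth false l (x'*3+y)) ==> (x == x')) i3) i3) i3.
Definition matchPl (l : seq bool) : bool :=
  all (fun x => all (fun s : bool => all (fun s' : bool =>
    (nth false l (x*2+s) && nth false l (x*2+s')) ==> (s == s')) bb) bb) i3 &&
  all (fun x => all (fun x' => all (fun s : bool =>
    (nth false l (x*2+s) && nth false l (x'*2+s)) ==> (x == x')) bb) i3) i3.
Definition matchQl (l : seq bool) : bool :=
  all (fun s : bool => all (fun y => all (fun y' =>
    (nth false l (s*3+y) && nth false l (s*3+y')) ==> (y == y')) i3) i3) bb &&
  all (fun s : bool => all (fun s' : bool => all (fun y =>
    (nth false l (s*3+y) && nth false l (s'*3+y)) ==> (s == s')) i3) bb) bb.

Definition ext_dir_ok (k : mseg) (l : seq bool) : bool :=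
  all (fun x => all (fun s : bool => all (fun y =>
    mvalid k x s y ==> ~~ nth false l (x*3+y)) i3) bb) i3.
Definition ext_run_ok (k : mseg) (lp lq : seq bool) : bool :=
  all (fun x => all (fun s : bool => all (fun y =>
    mvalid k x s y ==> ~~ nth false lp (x*2+s) && ~~ nth false lq (s*3+y)) i3) bb) i3.

Definition check_dir : bool :=
  all (fun l => matchMl l ==> has (fun k => ext_dir_ok k l) allseg) (bits 9).
Definition check_run : bool :=
  all (fun lp => all (fun lq => matchPl lp && matchQl lq ==>
     has (fun k => ext_run_ok k lp lq) allseg) (bits 6)) (bits 6).

Lemma check_dir_ok : check_dir. Proof. vm_compute. reflexivity. Qed.
Lemma check_run_ok : check_run. Proof. vm_compute. reflexivity. Qed.


Lemma mseg_eq_dec : forall x y : mseg, {x = y} + {x <> y}.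
Proof. decide equality; apply: eq_comparable. Qed.
HB.instance Definition _ := hasDecEq.Build mseg (compareP mseg_eq_dec).
Lemma pt_eq_dec : forall x y : pt, {x = y} + {x <> y}.
Proof. decide equality; apply: eq_comparable. Qed.
HB.instance Definition _ := hasDecEq.Build pt (compareP pt_eq_dec).

Lemma mem_bits m l : size l = m -> l \in bits m.
Proof.
elim: m l => [|m IH] [|b l] //= [Hs].
rewrite mem_cat cats0; case: b; apply/orP; [left|right]; apply: map_f; exact: IH.
Qed.

Definition codeM (M : nat -> nat -> bool) := [seq M (i %/ 3) (i %% 3) | i <- iota 0 9].
Definition codeP (P : nat -> bool -> bool) := [seq P (i %/ 2) (odd i) | i <- iota 0 6].
Definition codeQ (Q : bool -> nat -> bool) := [seq Q (odd (i %/ 3)) (i %% 3) | i <- iota 0 6].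

Lemma nth_codeM M x y : x < 3 -> y < 3 -> nth false (codeM M) (x*3+y) = M x y.
Proof.
move=> hx hy; rewrite (nth_map 0); last by rewrite size_iota; lia.
rewrite nth_iota; last by lia.
by rewrite add0n divnMDl // modnMDl (divn_small hy) (modn_small hy) addn0.
Qed.

Lemma nth_codeP P x (s : bool) : x < 3 -> nth false (codeP P) (x*2+s) = P x s.
Proof.
move=> hx; rewrite (nth_map 0); last by rewrite size_iota; case: s; lia.
rewrite nth_iota; last by case: s; lia.
rewrite add0n divnMDl // oddD oddM andbF /=.
by case: s => /=; rewrite addn0.
Qed.

Lemma nth_codeQ Q (s : bool) y : y < 3 -> nth false (codeQ Q) (s*3+y) = Q s y.
Proof.
move=> hy; rewrite (nth_map 0); last by rewrite size_iota; case: s; lia.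
rewrite nth_iota; last by case: s; lia.
rewrite add0n divnMDl // (divn_small hy) addn0 modnMDl (modn_small hy).
by case: s.
Qed.

Definition pvalid (dir : bool) (M : nat -> nat -> bool) (P : nat -> bool -> bool)
  (Q : bool -> nat -> bool) (x : nat) (s : bool) (y : nat) : bool :=
  if dir then ~~ M x y else ~~ P x s && ~~ Q s y.

Lemma mem_i3 x : (x \in i3) = (x < 3).
Proof. by rewrite mem_iota. Qed.

Lemma ext_seg (dir : bool) (M : nat -> nat -> bool) (P : nat -> bool -> bool)
  (Q : bool -> nat -> bool) :
  (dir -> (forall x y y', x < 3 -> y < 3 -> y' < 3 -> M x y -> M x y' -> y = y') /\
          (forall x x' y, x < 3 -> x' < 3 -> y < 3 -> M x y -> M x' y -> x = x')) ->
  (~~ dir -> (forall x s s', x < 3 -> P x s -> P x s' -> s = s') /\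
             (forall x x' s, x < 3 -> x' < 3 -> P x s -> P x' s -> x = x') /\
             (forall s y y', y < 3 -> y' < 3 -> Q s y -> Q s y' -> y = y') /\
             (forall s s' y, y < 3 -> Q s y -> Q s' y -> s = s')) ->
  exists2 k, k \in allseg & forall x s y, x < 3 -> y < 3 -> mvalid k x s y ->
     pvalid dir M P Q x s y.
Proof.
case: dir => [/(_ isT) [H1 H2] _ | _ /(_ isT) [H1 [H2 [H3 H4]]]].
- have := check_dir_ok; rewrite /check_dir => /allP /(_ (codeM M)).
  rewrite mem_bits ?size_map ?size_iota // => /(_ isT).
  have -> : matchMl (codeM M).
    apply/andP; split; apply/allP => x; rewrite mem_i3 => hx; apply/allP => y;
      rewrite mem_i3 => hy; apply/allP => z; rewrite mem_i3 => hz; apply/implyP.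
    + by rewrite !nth_codeM // => /andP [a b]; apply/eqP; exact: H1 a b.
    + by rewrite !nth_codeM // => /andP [a b]; apply/eqP; exact: H2 a b.
  move=> /hasP [k hk /allP hok]; exists k => // x s y hx hy hv.
  move: (hok x); rewrite mem_i3 => /(_ hx) /allP /(_ s).
  have hs : s \in bb by rewrite !inE; case: (s).
  move=> /(_ hs) /allP /(_ y); rewrite mem_i3 => /(_ hy) /implyP /(_ hv).
  by rewrite nth_codeM.
- have := check_run_ok; rewrite /check_run => /allP /(_ (codeP P)).
  rewrite mem_bits ?size_map ?size_iota // => /(_ isT) /allP /(_ (codeQ Q)).
  rewrite mem_bits ?size_map ?size_iota // => /(_ isT).
  have -> : matchPl (codeP P).
    apply/andP; split; apply/allP => x; rewrite ?mem_i3 ?inE => hx; apply/allP => y;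
      rewrite ?mem_i3 ?inE => hy; apply/allP => z; rewrite ?mem_i3 ?inE => hz; apply/implyP.
    + rewrite !nth_codeP // => /andP [a b]; apply/eqP.
      by case: y z hy hz a b => [] [] //= _ _ a b; exact: H1 a b.
    + rewrite !nth_codeP // => /andP [a b]; apply/eqP.
      by case: z hz a b => [] //= _ a b; exact: H2 a b.
  have -> : matchQl (codeQ Q).
    apply/andP; split; apply/allP => x; rewrite ?mem_i3 ?inE => hx; apply/allP => y;
      rewrite ?mem_i3 ?inE => hy; apply/allP => z; rewrite ?mem_i3 ?inE => hz; apply/implyP.
    + case: x hx => [] _; rewrite !nth_codeQ // => /andP [a b]; apply/eqP; exact: H3 a b.
    + case: x y hx hy => [] [] _ _; rewrite !nth_codeQ // => /andP [a b]; apply/eqP;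
        exact: H4 a b.
  move=> /hasP [k hk /allP hok]; exists k => // x s y hx hy hv.
  move: (hok x); rewrite mem_i3 => /(_ hx) /allP /(_ s).
  have hs : s \in bb by rewrite !inE; case: (s).
  move=> /(_ hs) /allP /(_ y); rewrite mem_i3 => /(_ hy) /implyP /(_ hv).
  by rewrite nth_codeP // nth_codeQ.
Qed.

Lemma conc_main c1 c2 c3 : c1 \in allseg -> c2 \in allseg -> c3 \in allseg ->
  checkW' c1 c2 c3 (wit c1 c2 c3).
Proof.
move=> h1 h2 h3; have := allcheck'_ok; rewrite /allcheck'.
by move=> /allP /(_ _ h1) /allP /(_ _ h2) /allP /(_ _ h3).
Qed.

Lemma sumR_count (R : realType) (T : Type) (W : seq T) (P : pred T) :
  (\sum_(w <- W) (P w)%:R = (count P W)%:R :> R)%R.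
Proof.
elim: W => [|a W IH]; first by rewrite big_nil.
by rewrite big_cons IH /= natrD.
Qed.

Section Gen.
Variable R : realType.
Variable n : nat.
Variables (V : finType) (h : rel V).
Local Notation N := n.+1.

Definition disj (S : 'I_N -> {set V}) := forall u v x, x \in S u -> x \in S v -> u = v.
Definition nonadj (S : 'I_N -> {set V}) :=
  forall u v x y, u != v -> ~~ cycle_adj u v -> x \in S u -> y \in S v -> ~~ h x y.
Definition matchc (S : 'I_N -> {set V}) :=
  forall u v x, cycle_adj u v -> x \in S u -> #|[set y in S v | h x y]| <= 1.
Definition cov S := [/\ disj S, nonadj S & matchc S].
Definition indep (T : {set V}) := [forall x in T, forall y in T, ~~ h x y].
Definition trans (S : 'I_N -> {set V}) T :=
  [&& [forall v, #|T :&: S v| == 1], T \subset \bigcup_v S v & indep T].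
Definition packP (S : 'I_N -> {set V}) (w : {set V} -> R) :=
  [/\ (forall T, 0 <= w T)%R, (forall T, w T != 0%R -> trans S T),
      (\sum_(T : {set V}) w T = 1)%R &
      (forall v x, x \in S v -> \sum_(T : {set V} | x \in T) w T = (#|S v|%:R)^-1)%R].
Definition pack S := exists w, packP S w.

Definition upd (S : 'I_N -> {set V}) v y : 'I_N -> {set V} :=
  fun u => if u == v then S v :\ y else S u.

Lemma upd_sub (S : 'I_N -> {set V}) v y u : upd S v y u \subset S u.
Proof. by rewrite /upd; case: eqP => [->|_]; [exact: subsetDl|]. Qed.

Lemma cov_sub (S S' : 'I_N -> {set V}) : (forall u, S' u \subset S u) -> cov S -> cov S'.
Proof.
move=> sub [hd hn hm]; split.
- by move=> u v x /(subsetP (sub u)) a /(subsetP (sub v)) b; exact: hd a b.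
- by move=> u v x y a b /(subsetP (sub u)) c /(subsetP (sub v)) d; exact: hn c d.
- move=> u v x a /(subsetP (sub u)) b; apply: leq_trans (hm _ _ _ a b).
  by apply: subset_leq_card; apply/subsetP=> z; rewrite !inE => /andP[/(subsetP (sub v)) -> ->].
Qed.

Lemma trans_upd (S : 'I_N -> {set V}) v y T : disj S -> y \in S v -> trans (upd S v y) T -> trans S T.
Proof.
move=> hd yv /and3P [/forallP h1 /subsetP h2 h3].
have yT : y \notin T.
  apply/negP => /h2 /bigcupP [u _]; rewrite /upd; case: eqP => [_|/eqP nuv].
    by rewrite !inE eqxx.
  by move=> yu; move: nuv; rewrite (hd _ _ _ yu yv) eqxx.
apply/and3P; split => //.
- apply/forallP => u; move: (h1 u); rewrite /upd; case: (u =P v) => [->|_] //.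
  suff -> : T :&: (S v :\ y) = T :&: S v by [].
  apply/setP => z; rewrite !inE.
  by case: (z =P y) => // ->; rewrite (negbTE yT).
- apply/subsetP => z /h2 /bigcupP [u _ zu]; apply/bigcupP; exists u => //.
  exact: (subsetP (upd_sub S v y u)).
Qed.

Lemma shrink (S : 'I_N -> {set V}) v : cov S -> 3 <= #|S v| ->
  (forall y, y \in S v -> pack (upd S v y)) -> pack S.
Proof.
move=> cS hk hp; have [hd _ _] := cS.
have [W HW] : exists W : V -> {set V} -> R, forall y, y \in S v -> packP (upd S v y) (W y).
  apply: (@fin_all_exists V (fun _ => {set V} -> R) (fun y w => y \in S v -> packP (upd S v y) w)).
  move=> y; case: (boolP (y \in S v)) => yv; last by exists (fun _ => 0%R).
  by have [w hw] := hp y yv; exists w.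
set k := #|S v|.
have k0 : (k%:R != 0 :> R)%R by rewrite pnatr_eq0 -lt0n; lia.
exists (fun T => (k%:R^-1 * \sum_(y in S v) W y T)%R); split.
- move=> T; apply: mulr_ge0; first by rewrite invr_ge0 ler0n.
  by apply: sumr_ge0 => y yv; have [+ _ _ _] := HW y yv; apply.
- move=> T; rewrite mulf_eq0 negb_or => /andP [_].
  case: (pickP (fun y => (y \in S v) && (W y T != 0%R))) => [y /andP [yv wy] _|none].
    by have [_ + _ _] := HW y yv => /(_ T wy); exact: trans_upd.
  rewrite big1 ?eqxx // => y yv; move: (none y); rewrite yv /=.
  by move/negbT; rewrite negbK => /eqP.
- rewrite -mulr_sumr exchange_big /=.
  rewrite (eq_bigr (fun _ => 1%R)); last by move=> y yv; have [_ _ -> _] := HW y yv.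
  by rewrite sumr_const mulrC -[(1 *+ _)%R]mulr_natl mulr1 mulfV.
- move=> u x xu; rewrite -mulr_sumr exchange_big /=.
  have key : forall y, y \in S v ->
      (\sum_(T : {set V} | x \in T) W y T = if x \in upd S v y u then (#|upd S v y u|%:R)^-1 else 0)%R.
    move=> y yv; have [_ hs _ hm] := HW y yv.
    case: ifP => [xu'|xu']; first exact: hm.
    apply: big1 => T xT; apply/eqP; apply/negP => /negP/hs/and3P [_ /subsetP sub _].
    move: (sub _ xT) => /bigcupP [u' _ xu2].
    have xS : x \in S u' := subsetP (upd_sub S v y u') x xu2.
    have uu : u' = u := hd _ _ _ xS xu.
    by move: xu'; rewrite -uu xu2.
  rewrite (eq_bigr _ key); case: (u =P v) => [uv|/eqP nuv].
    subst u; rewrite /upd eqxx.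
    rewrite (bigD1 x) //= !inE eqxx /=.
    rewrite (eq_bigr (fun _ => ((k.-1)%:R)^-1)%R); last first.
      move=> y /andP [yv yx]; rewrite !inE eq_sym yx xu /=.
      by rewrite /k (cardsD1 y (S v)) yv add1n.
    rewrite add0r sumr_const.
    have -> : #|[pred y in S v | y != x]| = k.-1.
      by rewrite /k (cardD1 x (S v)) xu /=; apply: eq_card => z; rewrite !inE andbC.
    rewrite -[(_ *+ k.-1)%R]mulr_natr mulVf ?mulr1 // pnatr_eq0; lia.
  rewrite (eq_bigr (fun _ => (#|S u|%:R)^-1)%R); last first.
    by move=> y yv; rewrite /upd (negbTE nuv) xu.
  rewrite sumr_const -[(_ *+ #|S v|)%R]mulr_natr -/k mulrCA mulVf ?mulr1 //.
Qed.

End Gen.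

Section Gen2.
Variable R : realType.
Variable n : nat.
Variables (V : finType) (h : rel V).
Local Notation N := n.+1.
Local Notation cov := (@cov n V h).
Local Notation pack := (@pack R n V h).

Lemma sum_upd (S : 'I_N -> {set V}) v y : y \in S v ->
  (\sum_u #|upd S v y u|).+1 = \sum_u #|S u|.
Proof.
move=> yv; rewrite (bigD1 v) //= [RHS](bigD1 v) //= /upd eqxx (cardsD1 y (S v)) yv.
rewrite add1n addSn; congr (_ + _).+1; apply: eq_bigr => u /negbTE ->; by [].
Qed.

Lemma G_ind (coreA : forall S : 'I_N -> {set V}, cov S -> (forall v, 2 <= #|S v| <= 3) ->
            #|[set v | 3 <= #|S v|]| = 3 -> pack S) :
  forall m (S : 'I_N -> {set V}), \sum_v #|S v| <= m -> cov S -> (forall v, 2 <= #|S v|) ->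
  3 <= #|[set v | 3 <= #|S v|]| -> pack S.
Proof.
elim=> [|m IH] S hm cS h2 h3.
  move: hm; rewrite (bigD1 ord0) //=; move: (h2 ord0); lia.
case: (pickP (fun v => 3 < #|S v|)) => [v hv|no4].
  apply: (shrink cS (ltnW hv)) => y yv; apply: IH.
  - by move: hm; rewrite -(sum_upd yv).
  - by apply: cov_sub cS; exact: upd_sub.
  - move=> u; rewrite /upd; case: eqP => // _.
    by move: hv; rewrite (cardsD1 y (S v)) yv; lia.
  - suff -> : [set u | 3 <= #|upd S v y u|] = [set u | 3 <= #|S u|] by [].
    apply/setP => u; rewrite !inE /upd; case: (u =P v) => [->|] //.
    by move: hv; rewrite (cardsD1 y (S v)) yv; lia.
have le3 : forall v, #|S v| <= 3 by move=> v; move: (no4 v) => /negbT; rewrite -leqNgt.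
case: (ltnP 3 #|[set v | 3 <= #|S v|]|) => [big|small]; last first.
  apply: coreA => //; first by move=> v; rewrite h2 le3.
  by apply/eqP; rewrite eqn_leq small h3.
have [v] : exists v, v \in [set v | 3 <= #|S v|].
  by apply/set0Pn; rewrite -card_gt0; lia.
rewrite inE => hv.
apply: (shrink cS hv) => y yv; apply: IH.
- by move: hm; rewrite -(sum_upd yv).
- by apply: cov_sub cS; exact: upd_sub.
- move=> u; rewrite /upd; case: eqP => // _.
  by move: hv (le3 v); rewrite (cardsD1 y (S v)) yv; lia.
- suff -> : [set u | 3 <= #|upd S v y u|] = [set u | 3 <= #|S u|] :\ v.
    by move: big; rewrite (cardsD1 v [set u | 3 <= #|S u|]) inE hv; lia.
  apply/setP => u; rewrite !inE /upd; case: (u =P v) => [->|] //=.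
  by move: hv (le3 v); rewrite (cardsD1 y (S v)) yv; lia.
Qed.

Definition rot (p i : 'I_N) : 'I_N := inord ((i + p) %% N).

Lemma rot_val p i : nat_of_ord (rot p i) = (i + p) %% N.
Proof. by rewrite /rot inordK // ltn_pmod. Qed.

Lemma rot_inj p : injective (rot p).
Proof.
move=> i j /(congr1 (@nat_of_ord N)); rewrite !rot_val => /eqP.
rewrite eqn_modDr !modn_small // => /eqP; exact: val_inj.
Qed.

Lemma adj_rot p i j : cycle_adj (rot p i) (rot p j) = cycle_adj i j.
Proof.
have key : forall a b : 'I_N,
    (nat_of_ord (rot p b) == (nat_of_ord (rot p a)).+1 %% N) = (nat_of_ord b == a.+1 %% N).
  move=> a b; rewrite !rot_val.
  have -> : ((a + p) %% N).+1 = (a + p) %% N + 1 by rewrite addn1.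
  rewrite modnDml; have -> : a + p + 1 = a.+1 + p by lia.
  by rewrite eqn_modDr (modn_small (ltn_ord b)).
by rewrite /cycle_adj !key.
Qed.

Lemma pack_rot p (S : 'I_N -> {set V}) : pack (fun i => S (rot p i)) -> pack S.
Proof.
move=> [w [h1 h2 h3 h4]]; have [g hg1 hg2] := injF_bij (@rot_inj p).
exists w; split => //.
- move=> T /h2 /and3P [/forallP t1 t2 t3]; apply/and3P; split => //.
  + apply/forallP => v; move: (t1 (g v)); by rewrite hg2.
  + by rewrite (reindex_inj (@rot_inj p)).
- by move=> v x xv; move: (h4 (g v) x); rewrite hg2 => /(_ xv).
Qed.

Lemma cov_rot p (S : 'I_N -> {set V}) : cov S -> cov (fun i => S (rot p i)).
Proof.
move=> [hd hn hm]; split.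
- by move=> u v x a b; apply: rot_inj; exact: hd a b.
- move=> u v x y nuv nadj a b; apply: hn a b; last by rewrite adj_rot.
  by apply: contra nuv => /eqP/rot_inj ->.
- by move=> u v x a b; apply: hm b; rewrite adj_rot.
Qed.

Lemma core_any
  (coreL : forall (S : 'I_N -> {set V}) q r, cov S -> 0 < q -> q < r -> r <= n ->
     (forall v : 'I_N, #|S v| = if (val v == 0) || (val v == q) || (val v == r) then 3 else 2) ->
     pack S) :
  forall S : 'I_N -> {set V}, cov S -> (forall v, 2 <= #|S v| <= 3) ->
            #|[set v | 3 <= #|S v|]| = 3 -> pack S.
Proof.
move=> S cS h23 hD.
have [p] : exists p, p \in [set v | 3 <= #|S v|].
  by apply/set0Pn; rewrite -card_gt0 hD.
rewrite inE => hp; apply: (@pack_rot p S).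
set S' := fun i => S (rot p i).
have D'E : [set v | 3 <= #|S' v|] = rot p @^-1: [set v | 3 <= #|S v|].
  by apply/setP => v; rewrite !inE.
have hD' : #|[set v | 3 <= #|S' v|]| = 3 by rewrite D'E card_preimset //; exact: rot_inj.
have r0 : rot p ord0 = p by apply: val_inj => /=; rewrite rot_val add0n modn_small.
have i0 : ord0 \in [set v | 3 <= #|S' v|] by rewrite inE /S' r0.
have : #|[set v | 3 <= #|S' v|] :\ ord0| == 2 by move: hD'; rewrite (cardsD1 ord0) i0; lia.
move=> /cards2P [a [b [nab Dab]]].
have memD : forall v, (v \in [set v | 3 <= #|S' v|]) = (v == ord0) || (v == a) || (v == b).
  move=> v; case: (v =P ord0) => [->|/eqP nv0] //=.
  have : (v \in [set v | 3 <= #|S' v|] :\ ord0) = (v == a) || (v == b) by rewrite Dab !inE.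
  by rewrite !inE nv0.
have a0 : (a : nat) != 0.
  have : a \in [set v | 3 <= #|S' v|] :\ ord0 by rewrite Dab !inE eqxx.
  by rewrite !inE => /andP [na _]; apply: contra na => /eqP h0; apply/eqP/val_inj.
have b0 : (b : nat) != 0.
  have : b \in [set v | 3 <= #|S' v|] :\ ord0 by rewrite Dab !inE eqxx orbT.
  by rewrite !inE => /andP [nb _]; apply: contra nb => /eqP h0; apply/eqP/val_inj.
have nab' : (a : nat) != b by apply: contra nab => /eqP/val_inj ->.
apply: (coreL _ (minn a b) (maxn a b)).
- exact: cov_rot.
- by move: a0 b0; rewrite /minn; case: ifP; lia.
- by move: nab'; rewrite /minn /maxn; case: ifP; lia.
- by rewrite /maxn; case: ifP => _; rewrite -ltnS.
- move=> v; have := memD v; rewrite inE.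
  have -> : (v == ord0) || (v == a) || (v == b) =
            (val v == 0) || (val v == minn a b) || (val v == maxn a b).
    rewrite -!(inj_eq val_inj) /=; rewrite /minn /maxn; case: ifP => _ //.
    by do 3 case: eqP => //= ?; rewrite ?orbT ?orbF.
  move: (h23 (rot p v)); rewrite /S'; case: ifP => _ hh; lia.
Qed.

End Gen2.

Section Core.
Variable R : realType.
Variable n : nat.
Variables (V : finType) (h : rel V).
Hypothesis hsym : forall x y, h x y = h y x.
Hypothesis hirr : forall x, ~~ h x x.
Local Notation N := n.+1.
Variables (S : 'I_N -> {set V}) (q r : nat) (x0 : V).
Hypothesis cS : cov h S.
Hypotheses (q0 : 0 < q) (qr : q < r) (rn : r <= n).
Hypothesis sizeS : forall v : 'I_N,
  #|S v| = if (val v == 0) || (val v == q) || (val v == r) then 3 else 2.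

Definition special (k : nat) := (k == 0) || (k == q) || (k == r).
Definition sn (k : nat) := S (inord k).
Definition succ (k : nat) := if k == n then 0 else k.+1.

Lemma sn_size k : k <= n -> #|sn k| = if special k then 3 else 2.
Proof. by move=> kn; rewrite /sn sizeS /= inordK. Qed.

Definition std (k j : nat) := nth x0 (enum (sn k)) j.

Lemma std_in k j : j < #|sn k| -> std k j \in sn k.
Proof. by move=> hj; rewrite -mem_enum; apply: mem_nth; rewrite -cardE. Qed.

Lemma std_inj k i j : i < #|sn k| -> j < #|sn k| -> (std k i == std k j) = (i == j).
Proof. by move=> hi hj; rewrite /std nth_uniq ?enum_uniq // -cardE. Qed.

Lemma std_surj k x : x \in sn k -> exists2 j, j < #|sn k| & x = std k j.
Proof.
move=> xk; exists (index x (enum (sn k))); first by rewrite cardE index_mem mem_enum.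
by rewrite /std nth_index // mem_enum.
Qed.

Definition align (f : bool -> V) (k : nat) (b : bool) : V :=
  if h (f false) (std k false) || h (f true) (std k true) then std k (~~ b) else std k b.

Fixpoint lab (k : nat) : bool -> V :=
  if k is k'.+1 then (if special k' then (fun b : bool => std k'.+1 b) else align (lab k') k'.+1)
  else (fun b : bool => std 0 b).

Lemma lab_std k : 0 < k -> exists c : bool, forall b, lab k b = std k (c (+) b).
Proof.
case: k => // k _ /=; case: (special k).
  by exists false => b; rewrite addFb.
case: (boolP (h (lab k false) (std k.+1 false) || h (lab k true) (std k.+1 true))) => hc.
  by exists true => b; rewrite /align hc addTb.
by exists false => b; rewrite /align (negbTE hc) addFb.
Qed.

Lemma ns_pos k : ~~ special k -> 0 < k.
Proof. by rewrite /special; case: k. Qed.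

Lemma lab_in k b : k <= n -> ~~ special k -> lab k b \in sn k.
Proof.
move=> kn ks; have [c ->] := lab_std (ns_pos ks).
by apply: std_in; rewrite sn_size // (negbTE ks); case: (c (+) b).
Qed.

Lemma lab_inj k b b' : k <= n -> ~~ special k -> lab k b = lab k b' -> b = b'.
Proof.
move=> kn ks; have [c hc] := lab_std (ns_pos ks); rewrite !hc; move=> /eqP.
rewrite std_inj ?sn_size // ?(negbTE ks) //; try by case: (c (+) _).
by move: (c) (b) (b'); do 3 case.
Qed.

Lemma lab_surj k x : k <= n -> ~~ special k -> x \in sn k -> exists b, x = lab k b.
Proof.
move=> kn ks xk; have [c hc] := lab_std (ns_pos ks).
have [j] := std_surj xk; rewrite sn_size // (negbTE ks) => hj ->.
exists (c (+) (j != 0)); rewrite hc addbA addbb addFb.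
by case: j hj => [|[|]].
Qed.

Lemma succ_le k : k <= n -> succ k <= n.
Proof. by move=> kn; rewrite /succ; case: eqP => //; lia. Qed.

Lemma adj_succ k : k <= n ->
  cycle_adj (inord k : 'I_N) (inord (succ k)) && cycle_adj (inord (succ k) : 'I_N) (inord k).
Proof.
move=> kn; have key : (succ k == k.+1 %% N).
  rewrite /succ; case: (k =P n) => [->|/eqP kn']; first by rewrite modnn.
  by rewrite modn_small //; lia.
by rewrite /cycle_adj !inordK ?key ?orbT //; rewrite ltnS (succ_le kn).
Qed.

Lemma mA k x y y' : k <= n -> x \in sn k -> y \in sn (succ k) -> y' \in sn (succ k) ->
  h x y -> h x y' -> y = y'.
Proof.
move=> kn xk yk yk' hy hy'; have [_ _ hm] := cS.
have /andP [a _] := adj_succ kn.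
move: (hm _ _ _ a xk) => /card_le1_eqP H.
by rewrite (H y y') // inE ?yk ?yk' ?hy ?hy'.
Qed.

Lemma mB k x x' y : k <= n -> x \in sn k -> x' \in sn k -> y \in sn (succ k) ->
  h x y -> h x' y -> x = x'.
Proof.
move=> kn xk xk' yk hy hy'; have [_ _ hm] := cS.
have /andP [_ a] := adj_succ kn.
move: (hm _ _ _ a yk) => /card_le1_eqP H.
by rewrite (H x x') // inE ?xk ?xk' hsym ?hy ?hy'.
Qed.

Lemma align_ok k : k < n -> ~~ special k -> ~~ special k.+1 ->
  forall b, ~~ h (lab k b) (lab k.+1 b).
Proof.
move=> kn ks ks1 b.
have sk : succ k = k.+1 by rewrite /succ; case: eqP => //; lia.
have kn' : k <= n by lia.
have f0 := lab_in false kn' ks; have f1 := lab_in true kn' ks.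
have fne : lab k false != lab k true by apply/eqP => /(lab_inj kn' ks).
have sz1 : #|sn k.+1| = 2 by rewrite sn_size // (negbTE ks1).
have y0 : std k.+1 false \in sn (succ k) by rewrite sk; apply: std_in; rewrite sz1.
have y1 : std k.+1 true \in sn (succ k) by rewrite sk; apply: std_in; rewrite sz1.
have yne : std k.+1 false != std k.+1 true by rewrite std_inj ?sz1.
rewrite /= (negbTE ks) /align.
case: ifP => [/orP hc | /negbT]; last by case: b; rewrite negb_or => /andP [].
case: b; apply/negP => hh.
- case: hc => hc.
  + by move: fne; rewrite (mB kn' f0 f1 y0 hc hh) eqxx.
  + by move: yne; rewrite (mA kn' f1 y0 y1 hh hc) eqxx.
- case: hc => hc.
  + by move: yne; rewrite (mA kn' f0 y0 y1 hc hh) eqxx.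
  + by move: fne; rewrite (mB kn' f0 f1 y1 hh hc) eqxx.
Qed.

Lemma seg_ext (k1 f g k2 : nat) (dir : bool) : k1 <= n -> k2 <= n -> special k1 -> special k2 ->
  (dir -> k2 = succ k1) ->
  (~~ dir -> [/\ f = succ k1, succ g = k2, g <= n, ~~ special f & ~~ special g]) ->
  exists2 c, c \in allseg & forall x s y, x < 3 -> y < 3 -> mvalid c x s y ->
    pvalid dir (fun x y => h (std k1 x) (std k2 y)) (fun x s => h (std k1 x) (lab f s))
               (fun s y => h (lab g s) (std k2 y)) x s y.
Proof.
move=> k1n k2n sp1 sp2 hdir hrun.
have sz1 : #|sn k1| = 3 by rewrite sn_size // sp1.
have sz2 : #|sn k2| = 3 by rewrite sn_size // sp2.
apply: ext_seg.
- move=> /hdir e; split.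
  + move=> x y y' hx hy hy' a b; apply/eqP; rewrite -(@std_inj k2) ?sz2 //; apply/eqP.
    by apply: (mA k1n (std_in _) _ _ a b); rewrite ?sz1 // -e std_in ?sz2.
  + move=> x x' y hx hx' hy a b; apply/eqP; rewrite -(@std_inj k1) ?sz1 //; apply/eqP.
    by apply: (mB k1n (std_in _) (std_in _) _ a b); rewrite ?sz1 // -e std_in ?sz2.
- move=> /hrun [ef eg gn sf sg].
  have fn : f <= n by rewrite ef (succ_le k1n).
  split; [|split; [|split]].
  + move=> x s s' hx a b; apply: (lab_inj fn sf).
    by apply: (mA k1n (std_in _) _ _ a b); rewrite ?sz1 // -ef lab_in.
  + move=> x x' s hx hx' a b; apply/eqP; rewrite -(@std_inj k1) ?sz1 //; apply/eqP.
    by apply: (mB k1n (std_in _) (std_in _) _ a b); rewrite ?sz1 // -ef lab_in.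
  + move=> s y y' hy hy' a b; apply/eqP; rewrite -(@std_inj k2) ?sz2 //; apply/eqP.
    by apply: (mA gn (lab_in _ gn sg) _ _ a b); rewrite eg std_in ?sz2.
  + move=> s s' y hy a b; apply: (lab_inj gn sg).
    by apply: (mB gn (lab_in _ gn sg) (lab_in _ gn sg) _ a b); rewrite eg std_in ?sz2.
Qed.


Definition bit (w : pt) (k : nat) := if k < q then ps1 w else if k < r then ps2 w else ps3 w.
Definition chosen (w : pt) (k : nat) : V :=
  if k == 0 then std 0 (pa w) else if k == q then std q (pb w)
  else if k == r then std r (pc w) else lab k (bit w k).

Definition pv1 w := pvalid (q == 1) (fun x y => h (std 0 x) (std q y))
  (fun x s => h (std 0 x) (lab 1 s)) (fun s y => h (lab q.-1 s) (std q y)) (pa w) (ps1 w) (pb w).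
Definition pv2 w := pvalid (r == q.+1) (fun x y => h (std q x) (std r y))
  (fun x s => h (std q x) (lab q.+1 s)) (fun s y => h (lab r.-1 s) (std r y)) (pb w) (ps2 w) (pc w).
Definition pv3 w := pvalid (r == n) (fun x y => h (std r x) (std 0 y))
  (fun x s => h (std r x) (lab r.+1 s)) (fun s y => h (lab n s) (std 0 y)) (pc w) (ps3 w) (pa w).

Lemma nsp j : j != 0 -> j != q -> j != r -> ~~ special j.
Proof. by rewrite /special => /negbTE -> /negbTE -> /negbTE ->. Qed.

Lemma sp0 : special 0. Proof. by rewrite /special eqxx. Qed.
Lemma spq : special q. Proof. by rewrite /special eqxx orbT. Qed.
Lemma spr : special r. Proof. by rewrite /special eqxx orbT. Qed.

Lemma chosen_in w k : k <= n -> pa w < 3 -> pb w < 3 -> pc w < 3 -> chosen w k \in sn k.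
Proof.
move=> kn ha hb hc; rewrite /chosen.
case: (k =P 0) => [->|/eqP k0]; first by apply: std_in; rewrite sn_size // sp0.
case: (k =P q) => [->|/eqP kq]; first by apply: std_in; rewrite sn_size ?spq //; lia.
case: (k =P r) => [->|/eqP kr]; first by apply: std_in; rewrite sn_size ?spr //; lia.
by apply: lab_in => //; apply: nsp.
Qed.

Lemma chosen_ns w k : ~~ special k -> chosen w k = lab k (bit w k).
Proof.
rewrite /chosen /special => hs.
by move: hs; case: (k == 0); case: (k == q); case: (k == r).
Qed.

Lemma chosen_q w : chosen w q = std q (pb w).
Proof. by rewrite /chosen; case: eqP => [q00|_]; [move: q0; rewrite q00|rewrite eqxx]. Qed.

Lemma chosen_r w : chosen w r = std r (pc w).
Proof.
rewrite /chosen; case: eqP => [r00|_]; first by move: qr; rewrite r00.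
by case: eqP => [rq|_]; [move: qr; rewrite rq ltnn|rewrite eqxx].
Qed.

Lemma chosen_succ w k : pv1 w -> pv2 w -> pv3 w -> k <= n ->
  ~~ h (chosen w k) (chosen w (succ k)).
Proof.
rewrite /pv1 /pv2 /pv3 /pvalid => p1 p2 p3 kn.
have n2 : 2 <= n by lia.
case: (boolP (special k)) => sk.
- move: sk; rewrite /special => /orP [/orP [/eqP k0 | /eqP kq] | /eqP kr].
  + subst k; have -> : succ 0 = 1 by rewrite /succ; case: eqP => //; lia.
    case: (q =P 1) => [q1|/eqP q1].
      have e1 : (q == 1) = true by apply/eqP.
      by move: p1; rewrite e1 -q1 chosen_q.
    move: p1; rewrite (negbTE q1) => /andP [p1 _].
    rewrite (@chosen_ns w 1); last by apply: nsp; lia.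
    by rewrite /bit; case: ltnP => //; lia.
  + subst k; have -> : succ q = q.+1 by rewrite /succ; case: eqP => //; lia.
    rewrite chosen_q; case: (r =P q.+1) => [rq|/eqP rq].
      have e1 : (r == q.+1) = true by apply/eqP.
      by move: p2; rewrite e1 -rq chosen_r.
    move: p2; rewrite (negbTE rq) => /andP [p2 _].
    rewrite chosen_ns; last by apply: nsp; lia.
    rewrite /bit; case: ltnP => h1; first lia.
    by case: ltnP => h2 //; lia.
  + subst k; rewrite chosen_r; case: (r =P n) => [rn'|/eqP rn'].
      have -> : succ r = 0 by rewrite /succ rn' eqxx.
      have e1 : (r == n) = true by apply/eqP.
      by move: p3; rewrite e1.
    have -> : succ r = r.+1 by rewrite /succ (negbTE rn').
    move: p3; rewrite (negbTE rn') => /andP [p3 _].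
    rewrite chosen_ns; last by apply: nsp; lia.
    rewrite /bit; case: ltnP => h1; first lia.
    by case: ltnP => h2 //; lia.
- have nk0 : k != 0 by apply: contra sk => /eqP ->; exact: sp0.
  have nkq : k != q by apply: contra sk => /eqP ->; exact: spq.
  have nkr : k != r by apply: contra sk => /eqP ->; exact: spr.
  rewrite chosen_ns //.
  case: (k =P n) => [kn'|/eqP kn'].
    have -> : succ k = 0 by rewrite /succ kn' eqxx.
    have rn' : (r == n) = false by apply/negbTE; rewrite -kn' eq_sym.
    move: p3; rewrite rn' => /andP [_ p3].
    have -> : bit w k = ps3 w by rewrite /bit; case: ltnP => h1; [lia|case: ltnP => h2 //; lia].
    by rewrite kn'.
  have -> : succ k = k.+1 by rewrite /succ (negbTE kn').
  case: (k.+1 =P q) => [kq|/eqP kq].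
    have q1 : (q == 1) = false by apply/negbTE; lia.
    move: p1; rewrite q1 => /andP [_ p1].
    have -> : bit w k = ps1 w by rewrite /bit; case: ltnP => h1 //; lia.
    by rewrite kq chosen_q; move: p1; rewrite -kq.
  case: (k.+1 =P r) => [kr|/eqP kr].
    have rq : (r == q.+1) = false by apply/negbTE; lia.
    move: p2; rewrite rq => /andP [_ p2].
    have -> : bit w k = ps2 w by rewrite /bit; case: ltnP => h1; [lia|case: ltnP => h2 //; lia].
    by rewrite kr chosen_r; move: p2; rewrite -kr.
  have sk1 : ~~ special k.+1 by apply: nsp.
  rewrite chosen_ns //.
  have -> : bit w k.+1 = bit w k.
    rewrite /bit; have -> : (k.+1 < q) = (k < q) by lia.
    by have -> : (k.+1 < r) = (k < r) by lia.
  by apply: align_ok => //; lia.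
Qed.

Lemma succ_mod k : k <= n -> k.+1 %% N = succ k.
Proof.
move=> kn; rewrite /succ; case: (k =P n) => [->|/eqP kn']; first by rewrite modnn.
by rewrite modn_small //; lia.
Qed.

Lemma adjE (u v : 'I_N) : cycle_adj u v = (nat_of_ord v == succ u) || (nat_of_ord u == succ v).
Proof. by rewrite /cycle_adj !succ_mod // -ltnS. Qed.

Definition Tw (w : pt) : {set V} := [set chosen w (nat_of_ord v) | v : 'I_N].

Lemma chosen_inS w (v : 'I_N) : pa w < 3 -> pb w < 3 -> pc w < 3 -> chosen w v \in S v.
Proof.
move=> ha hb hc; have := @chosen_in w v (ltn_ord v) ha hb hc.
by rewrite /sn inord_val.
Qed.

Lemma T_mem w (v : 'I_N) x : pa w < 3 -> pb w < 3 -> pc w < 3 -> x \in S v ->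
  (x \in Tw w) = (chosen w v == x).
Proof.
move=> ha hb hc xv; have [hd _ _] := cS.
apply/imsetP/eqP => [[u _ xe]|<-]; last by exists v.
by rewrite xe in xv *; rewrite (hd _ _ _ (chosen_inS u ha hb hc) xv).
Qed.

Lemma trans_T w : pa w < 3 -> pb w < 3 -> pc w < 3 -> pv1 w -> pv2 w -> pv3 w ->
  trans h S (Tw w).
Proof.
move=> ha hb hc p1 p2 p3; have [hd hn _] := cS.
apply/and3P; split.
- apply/forallP => v; suff -> : Tw w :&: S v = [set chosen w v] by rewrite cards1.
  apply/setP => x; rewrite !inE; case: (boolP (x \in S v)) => xv.
    by rewrite andbT (T_mem ha hb hc xv) eq_sym.
  rewrite andbF; apply/esym/negbTE; apply: contra xv => /eqP ->; exact: chosen_inS.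
- apply/subsetP => x /imsetP [u _ ->]; apply/bigcupP; exists u => //; exact: chosen_inS.
- apply/forallP => x; apply/implyP => /imsetP [u _ ->].
  apply/forallP => y; apply/implyP => /imsetP [v _ ->].
  case: (u =P v) => [->|/eqP nuv]; first exact: hirr.
  case: (boolP (cycle_adj u v)) => [adj|nadj]; last first.
    by apply: hn nadj _ _; rewrite ?chosen_inS.
  rewrite adjE in adj; case/orP: adj => /eqP e.
    by rewrite e; apply: chosen_succ => //; exact: (ltn_ord u).
  by rewrite hsym e; apply: chosen_succ => //; exact: (ltn_ord v).
Qed.


Lemma sum1_seq (s : seq pt) : (\sum_(w <- s) (1 : R) = (size s)%:R)%R.
Proof. by elim: s => [|a s IH]; rewrite ?big_nil // big_cons IH /= -add1n natrD. Qed.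

Lemma cnt3 (W : seq pt) (sel : pt -> bool) : size W = 6 -> count sel W = 3 ->
  forall b, count (fun w => sel w == b) W = 3.
Proof.
move=> hs hc [].
  by rewrite -hc; apply: eq_count => w; case: (sel w).
have := count_predC sel W; rewrite hc hs => e.
by rewrite (eq_count (a2 := predC sel)); [lia | move=> w /=; case: (sel w)].
Qed.

Lemma core_pack : @pack R n V h S.
Proof.
have n2 : 2 <= n by lia.
have p1a : q <= n by lia.
have p1b : (q == 1) -> q = succ 0 by move=> /eqP ->; rewrite /succ; case: eqP => //; lia.
have p1c : ~~ (q == 1) ->
    [/\ 1 = succ 0, succ q.-1 = q, q.-1 <= n, ~~ special 1 & ~~ special q.-1].
  move=> q1; split; [rewrite /succ; case: eqP => //; lia | rewrite /succ; case: eqP => [|_]; lia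
                    | lia | apply: nsp; lia | apply: nsp; lia].
have [c1 hc1 hv1] := seg_ext (leq0n n) p1a sp0 spq p1b p1c.
have p2b : (r == q.+1) -> r = succ q by move=> /eqP ->; rewrite /succ; case: eqP => //; lia.
have p2c : ~~ (r == q.+1) ->
    [/\ q.+1 = succ q, succ r.-1 = r, r.-1 <= n, ~~ special q.+1 & ~~ special r.-1].
  move=> q1; split; [rewrite /succ; case: eqP => //; lia | rewrite /succ; case: eqP => [|_]; lia
                    | lia | apply: nsp; lia | apply: nsp; lia].
have [c2 hc2 hv2] := seg_ext p1a rn spq spr p2b p2c.
have p3b : (r == n) -> 0 = succ r by move=> /eqP ->; rewrite /succ eqxx.
have p3c : ~~ (r == n) ->
    [/\ r.+1 = succ r, succ n = 0, n <= n, ~~ special r.+1 & ~~ special n].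
  move=> q1; split; [rewrite /succ; case: eqP => //; lia | by rewrite /succ eqxx
                    | lia | apply: nsp; lia | apply: nsp; lia].
have [c3 hc3 hv3] := seg_ext rn (leq0n n) spr sp0 p3b p3c.
set W := wit c1 c2 c3.
have := conc_main hc1 hc2 hc3; rewrite -/W /checkW' /checkW.
move=> /andP [/and4P [/eqP hsz /allP hval /allP hcnt /and3P [/eqP cs1 /eqP cs2 /eqP cs3]] /allP hcol].
have hW : forall w, w \in W -> [/\ pa w < 3, pb w < 3, pc w < 3 & [/\ pv1 w, pv2 w & pv3 w]].
  move=> w wW; have /and3P [ha hb hc] := hcol w wW.
  have /and3P [m1 m2 m3] := hval w wW.
  by split => //; split; [exact: hv1 | exact: hv2 | exact: hv3].
have hcnt' : forall (sel : pt -> nat), sel = pa \/ sel = pb \/ sel = pc ->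
    forall j, j < 3 -> count (fun w => sel w == j) W = 2.
  move=> sel hsel j hj; have : j \in [:: 0; 1; 2] by rewrite !inE; lia.
  by move=> /hcnt /and3P [/eqP e1 /eqP e2 /eqP e3]; case: hsel => [->|[->|->]].
exists (fun T => ((6%:R)^-1 * \sum_(w <- W) (T == Tw w)%:R)%R); split.
- move=> T; apply: mulr_ge0; first by rewrite invr_ge0 ler0n.
  by apply: sumr_ge0 => w _; exact: ler0n.
- move=> T; rewrite mulf_eq0 negb_or => /andP [_ hs].
  have [w wW /eqP ->] : exists2 w, w \in W & T == Tw w.
    apply/hasP; apply: contraR hs => /hasPn hn.
    by rewrite big_seq big1 // => w /hn /negbTE ->.
  have [ha hb hc [e1 e2 e3]] := hW w wW; exact: trans_T.
- rewrite -mulr_sumr exchange_big /=.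
  rewrite (eq_bigr (fun _ => 1%R)); last first.
    move=> w _; rewrite (bigD1 (Tw w)) //= eqxx big1 ?addr0 // => T /negbTE ->; by [].
  rewrite sum1_seq hsz mulVf // pnatr_eq0 //.
- move=> v x xv; rewrite -mulr_sumr exchange_big /=.
  rewrite (eq_bigr (fun w => (x \in Tw w)%:R)%R); last first.
    move=> w _; case: (boolP (x \in Tw w)) => hx.
      rewrite (bigD1 (Tw w)) //= eqxx big1 ?addr0 // => T /andP [_ /negbTE ->]; by [].
    rewrite big1 // => T xT; case: eqP => // e; by move: hx; rewrite -e xT.
  rewrite (_ : (\sum_(w <- W) (x \in Tw w)%:R = (count (fun w => x \in Tw w) W)%:R :> R)%R); last exact: (@sumR_count R pt W (fun w => x \in Tw w)).
  have -> : count (fun w => x \in Tw w) W = count (fun w => chosen w v == x) W.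
    by apply: eq_in_count => w /hW [ha hb hc _]; rewrite (T_mem ha hb hc xv).
  have vn : (v : nat) <= n := ltn_ord v.
  have xv' : x \in sn v by rewrite /sn inord_val.
  have hsz3 : forall k, special k -> k <= n -> #|sn k| = 3 by move=> k sk kn; rewrite sn_size // sk.
  rewrite sizeS -/(special v); case: (boolP (special v)) => sv.
    have [j hj ->] := std_surj xv'; rewrite hsz3 // in hj.
    have sel_ok : exists sel : pt -> nat, (sel = pa \/ sel = pb \/ sel = pc) /\
                      (forall w, chosen w v = std v (sel w)).
      move: sv; rewrite /special => /orP [/orP [/eqP e|/eqP e]|/eqP e].
      + exists pa; split; [by left | move=> w; by rewrite e].
      + exists pb; split; [by right; left | move=> w; by rewrite e chosen_q].
      + exists pc; split; [by right; right | move=> w; by rewrite e chosen_r].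
    have [sel [hsel hch]] := sel_ok.
    have -> : count (fun w => chosen w v == std v j) W = count (fun w => sel w == j) W.
      apply: eq_in_count => w /hW [ha hb hc _]; rewrite hch std_inj // hsz3 //.
      by case: hsel => [->|[->|->]].
    rewrite hcnt' //; by field; rewrite ?pnatr_eq0 ?mulf_neq0 ?pnatr_eq0.
  have [b ->] := lab_surj vn sv xv'.
  have [sel [hsel hcs]] : exists sel : pt -> bool,
      (forall w, bit w v = sel w) /\ count sel W = 3.
    rewrite /bit; case: ltnP => _; first by exists ps1.
    by case: ltnP => _; [exists ps2 | exists ps3].
  have -> : count (fun w => chosen w v == lab v b) W = count (fun w => sel w == b) W.
    apply: eq_count => w; rewrite chosen_ns // hsel.
    apply/eqP/eqP => [/(lab_inj vn sv)|->] //.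
  rewrite cnt3 //; by field; rewrite ?pnatr_eq0 ?mulf_neq0 ?pnatr_eq0.
Qed.

End Core.

Theorem mainTheorem14 (R : realType) (n : nat) (V : finType) (h : rel V)
    (L : 'I_n -> {set V}) :
  (3 <= n)%N ->
  correspondence_cover (@cycle_adj n) h L ->
  (forall v, 2 <= #|L v|)%N ->
  (3 <= #|[set v | 3 <= #|L v|]|)%N ->
  fractional_packing R h L.
Proof.
move=> hn; case: n hn L => [//|n] hn L [[hsym hirr] [_ [huniq [_ [hna hm]]]]] h2 h3.
have cL : cov h L by split => //; move=> u v x a b; exact: huniq a b.
have [x0 _] : exists x, x \in L ord0.
  by apply/set0Pn; rewrite -card_gt0; move: (h2 ord0); lia.
have coreL := fun S q r cS q0 qr rn sz => @core_pack R n V h hsym hirr S q r x0 cS q0 qr rn sz.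
have [w [w1 w2 w3 w4]] := G_ind (core_any coreL) (leqnn _) cL h2 h3.
exists w; split => //; split => //.
by move=> T /w2 /and3P [t1 _ t3]; apply/andP; split.
Qed.
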